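(* Let $\vartheta$ be a primitive semi-compatible random substitution on $\mathcal A=\{a_1,\dots,a_n\}$ with topological entropy $s$ and lower/upper inflation word entropies $\underline s_i^I$, $\overline s_i^I$. Then for all $1\leqslant i\leqslant n$ and all $m\in\mathbb N$, \[ \frac{1}{\lambda^m}\bm q_m^\intercal\bm R\;\leqslant\;\underline s_i^I\;\leqslant\;\overline s_i^I\;\leqslant\;s\;\leqslant\;\frac{1}{\lambda^m-1}\bm q_m^\intercal\bm R . \] In particular the limit $s^I=\lim_{m\to\infty}\frac{1}{\ell_{m,i}}\log(\#\vartheta^m(a_i))$ exists, is independent of $i$, and \[ s=s^I=\lim_{m\to\infty}\frac{1}{\lambda^m}\bm q_m^\intercal\bm R=\sup_{m\in\mathbb N}\frac{1}{\lambda^m}\bm q_m^\intercal\bm R . \]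
   Context: Let $\mathcal A=\{a_1,\dots,a_n\}$ be a finite alphabet, $\mathcal A^+$ the finite non-empty words over $\mathcal A$. A random substitution is a map $\vartheta$ from $\mathcal A$ to finite non-empty subsets of $\mathcal A^+$, extended to words by $\vartheta(u_1\cdots u_m)=\{w_1\cdots w_m: w_k\in\vartheta(u_k)\}$ and to sets of words by unions; powers $\vartheta^m$ are compositions. $|u|_a$ is the number of occurrences of letter $a$ in $u$; $\Phi(u)=(|u|_{a_1},\dots,|u|_{a_n})^\intercal$. $\vartheta$ is semi-compatible if for each $a$ all words in $\vartheta(a)$ have the same $\Phi$; then all words in $\vartheta^m(a_i)$ have a common length $\ell_{m,i}$. Substitution matrix $M_{ij}=|u|_{a_i}$, $u\in\vartheta(a_j)$; primitive means $M$ primitive, with Perron–Frobenius eigenvalue $\lambda$ and right PF eigenvector $\bm R$, $\|\bm R\|_1=1$. $q_{m,i}=\log\#\vartheta^m(a_i)$, $\bm q_m=(q_{m,1},\dots,q_{m,n})^\intercal$. $\underline s_i^I=\liminf_{m\to\infty}q_{m,i}/\ell_{m,i}$, $\overline s_i^I=\limsup_{m\to\infty}q_{m,i}/\ell_{m,i}$. The language $\mathcal L$ is the set of all subwords of words in $\vartheta^m(a)$, $a\in\mathcal A$, $m\in\mathbb N$; $\mathcal L_\ell$ its words of length $\ell$; topological entropy $s=\lim_{\ell\to\infty}\frac1\ell\log\#\mathcal L_\ell$. *)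

(* Defs.v *)
From Stdlib Require Import Reals Lra Lia Arith List.
Import ListNotations.
Open Scope R_scope.

(* Alphabet A = {a_1,...,a_n} is encoded as the letters 0,...,n-1 (nat).  A random substitution is
   theta : nat -> list (list nat), theta a listing the (finite) set theta(a). *)

Definition word := list nat.

(* theta(u_1...u_m) = { w_1...w_m : w_k in theta(u_k) }  (as a list, possibly
   with repetitions; sets are identified with the set of list elements). *)
Fixpoint subst_word (theta : nat -> list word) (u : word) : list word :=
  match u with
  | [] => [ [] ]
  | x :: u' => flat_map (fun v => map (fun w => v ++ w) (subst_word theta u'))
                        (theta x)
  end.

Definition subst_set (theta : nat -> list word) (S : list word) : list word :=
  flat_map (subst_word theta) S.

Definition subst_pow (theta : nat -> list word) (m : nat) (a : nat) : list word :=
  Nat.iter m (subst_set theta) [ [a] ].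

Definition card_words (l : list word) : nat :=
  length (nodup (list_eq_dec Nat.eq_dec) l).

Definition occ (u : word) (b : nat) : nat := count_occ Nat.eq_dec u b.

Definition is_random_subst (n : nat) (theta : nat -> list word) : Prop :=
  forall a, (a < n)%nat ->
    theta a <> [] /\
    forall w, In w (theta a) -> w <> [] /\ forall x, In x w -> (x < n)%nat.

Definition semi_compatible (n : nat) (theta : nat -> list word) : Prop :=
  forall a, (a < n)%nat -> forall u v, In u (theta a) -> In v (theta a) ->
    forall b, occ u b = occ v b.

(* substitution matrix M_{ba} = |u|_b, u in theta(a) (well defined by
   semi-compatibility) *)
Definition subst_matrix (theta : nat -> list word) (b a : nat) : nat :=
  occ (hd [] (theta a)) b.

Definition nsum (n : nat) (f : nat -> nat) : nat :=
  fold_right Nat.add 0%nat (map f (seq 0 n)).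

Definition matmul (n : nat) (A B : nat -> nat -> nat) : nat -> nat -> nat :=
  fun i j => nsum n (fun k => (A i k * B k j)%nat).

Fixpoint matpow (n : nat) (A : nat -> nat -> nat) (k : nat) : nat -> nat -> nat :=
  match k with
  | O => fun i j => if Nat.eqb i j then 1%nat else 0%nat
  | S k' => matmul n A (matpow n A k')
  end.

Definition primitive_mat (n : nat) (A : nat -> nat -> nat) : Prop :=
  exists k, (1 <= k)%nat /\ forall i j, (i < n)%nat -> (j < n)%nat ->
    (0 < matpow n A k i j)%nat.

Definition rsum (n : nat) (f : nat -> R) : R :=
  fold_right Rplus 0 (map f (seq 0 n)).

(* lambda is the Perron-Frobenius eigenvalue and R the right PF eigenvector
   normalised by ||R||_1 = 1: R is a strictly positive right eigenvector for
   lambda (for a primitive matrix this characterises the PF pair uniquely). *)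
Definition PF_pair (n : nat) (M : nat -> nat -> nat) (lam : R) (Rv : nat -> R)
  : Prop :=
  (forall i, (i < n)%nat -> 0 < Rv i) /\
  rsum n Rv = 1 /\
  forall b, (b < n)%nat -> rsum n (fun a => INR (M b a) * Rv a) = lam * Rv b.

(* ell_{m,i} : common length of the words of theta^m(a_i) *)
Definition ell (theta : nat -> list word) (m i : nat) : nat :=
  length (hd [] (subst_pow theta m i)).

Definition q (theta : nat -> list word) (m i : nat) : R :=
  ln (INR (card_words (subst_pow theta m i))).

Definition qR (n : nat) (theta : nat -> list word) (Rv : nat -> R) (m : nat) : R :=
  rsum n (fun i => q theta m i * Rv i).

Definition subword (u w : word) : Prop := exists p s, w = p ++ u ++ s.

Definition lang (n : nat) (theta : nat -> list word) (l : nat) (u : word) : Prop :=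
  length u = l /\
  exists m a w, (a < n)%nat /\ In w (subst_pow theta m a) /\ subword u w.

Definition has_card (P : word -> Prop) (k : nat) : Prop :=
  exists l, NoDup l /\ (forall w, In w l <-> P w) /\ length l = k.

Definition top_entropy (n : nat) (theta : nat -> list word) (s : R) : Prop :=
  exists c : nat -> nat, (forall l, has_card (lang n theta l) (c l)) /\
    Un_cv (fun l => ln (INR (c l)) / INR l) s.

Definition is_liminf (u : nat -> R) (x : R) : Prop :=
  forall eps, 0 < eps ->
    (exists N, forall m, (N <= m)%nat -> x - eps < u m) /\
    (forall N, exists m, (N <= m)%nat /\ u m < x + eps).

Definition is_limsup (u : nat -> R) (x : R) : Prop :=
  forall eps, 0 < eps ->
    (exists N, forall m, (N <= m)%nat -> u m < x + eps) /\
    (forall N, exists m, (N <= m)%nat /\ x - eps < u m).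

Definition infl_seq (theta : nat -> list word) (i : nat) : nat -> R :=
  fun m => q theta m i / INR (ell theta m i).

(* Main.v *)
Require Import Defs.
From Stdlib Require Import Reals Lra Lia Arith List.
Import ListNotations.
Open Scope R_scope.

Notation deq := (list_eq_dec Nat.eq_dec).

Lemma card_incl (l1 l2 : list word) :
  (forall x, In x l1 -> In x l2) -> (card_words l1 <= card_words l2)%nat.
Proof.
  intros H; unfold card_words. apply NoDup_incl_length. apply NoDup_nodup.
  intros x Hx. apply nodup_In. apply H. apply nodup_In in Hx; exact Hx.
Qed.

Lemma card_ext (l1 l2 : list word) :
  (forall x, In x l1 <-> In x l2) -> card_words l1 = card_words l2.
Proof.
  intros H. apply Nat.le_antisymm; apply card_incl; intros x; apply H.
Qed.

Lemma nodup_length_le {A} dec (l : list A) : (length (nodup dec l) <= length l)%nat.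
Proof.
  induction l as [|x l IH]; simpl; [lia|]. destruct (in_dec dec x l); simpl; lia.
Qed.

Lemma card_le_length (l : list word) : (card_words l <= length l)%nat.
Proof. apply nodup_length_le. Qed.

Lemma card_NoDup (l : list word) : NoDup l -> card_words l = length l.
Proof. intros H; unfold card_words; rewrite nodup_fixed_point; auto. Qed.

Lemma card_pos (l : list word) x : In x l -> (1 <= card_words l)%nat.
Proof.
  intros H. unfold card_words. destruct (nodup deq l) eqn:E.
  - assert (In x (nodup deq l)) by (apply nodup_In; auto). rewrite E in H0; destruct H0.
  - simpl; lia.
Qed.

Lemma card_le1 (l : list word) : (forall x y, In x l -> In y l -> x = y) ->
  (card_words l <= 1)%nat.
Proof.
  intros H. unfold card_words.
  assert (Hn : NoDup (nodup deq l)) by apply NoDup_nodup.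
  destruct (nodup deq l) as [|a [|b t]] eqn:E; simpl; try lia.
  exfalso. inversion Hn; subst. apply H2. left. symmetry. apply H.
  - apply (nodup_In deq). rewrite E; simpl; auto.
  - apply (nodup_In deq). rewrite E; simpl; auto.
Qed.

Lemma app_same_length (x x' y y' : word) :
  length x = length x' -> x ++ y = x' ++ y' -> x = x' /\ y = y'.
Proof.
  revert x'; induction x as [|a x IH]; intros [|a' x'] Hl He; simpl in *; try lia; auto.
  injection He as -> He. destruct (IH x') as [-> ->]; auto.
Qed.

Lemma length_flat_map_const {A B} (f : A -> list B) (l : list A) k :
  (forall x, In x l -> length (f x) = k) -> length (flat_map f l) = (length l * k)%nat.
Proof.
  induction l as [|a l IH]; intros H; simpl; auto.
  rewrite length_app, H, IH; simpl; auto; intros; apply H; simpl; auto.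
Qed.

Lemma length_flat_map_le {A B} (f : A -> list B) (l : list A) k :
  (forall x, In x l -> (length (f x) <= k)%nat) -> (length (flat_map f l) <= length l * k)%nat.
Proof.
  induction l as [|a l IH]; intros H; simpl; auto.
  rewrite length_app.
  assert (length (flat_map f l) <= length l * k)%nat by (apply IH; intros; apply H; simpl; auto).
  specialize (H a (or_introl eq_refl)). lia.
Qed.

Lemma length_flat_map_leR {A B} (f : A -> list B) (l : list A) (k : R) :
  (forall x, In x l -> INR (length (f x)) <= k) ->
  INR (length (flat_map f l)) <= INR (length l) * k.
Proof.
  induction l as [|a l IH]; intros H.
  - simpl; lra.
  - change (flat_map f (a :: l)) with (f a ++ flat_map f l).
    rewrite length_app, plus_INR. change (length (a :: l)) with (S (length l)). rewrite S_INR.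
    assert (H1 := H a (or_introl eq_refl)).
    assert (INR (length (flat_map f l)) <= INR (length l) * k)
      by (apply IH; intros; apply H; simpl; auto). lra.
Qed.

Lemma card_prod (A B C : list word) :
  (forall w, In w C <-> exists w1 w2, w = w1 ++ w2 /\ In w1 A /\ In w2 B) ->
  (forall x y, In x A -> In y A -> length x = length y) ->
  card_words C = (card_words A * card_words B)%nat.
Proof.
  intros HC HA.
  set (A' := nodup deq A). set (B' := nodup deq B).
  set (L := flat_map (fun x => map (fun y => x ++ y) B') A').
  assert (E : card_words C = card_words L).
  { apply card_ext. intros w. rewrite HC. unfold L. rewrite in_flat_map. split.
    - intros (w1 & w2 & -> & H1 & H2). exists w1. split. apply nodup_In; auto.
      apply in_map. apply nodup_In; auto.
    - intros (x & Hx & Hw). apply in_map_iff in Hw. destruct Hw as (y & <- & Hy).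
      exists x, y. split; auto. split; [apply (nodup_In deq)|apply (nodup_In deq)]; auto. }
  rewrite E.
  assert (ND : NoDup L).
  { unfold L.
    assert (HA' : forall x y, In x A' -> In y A' -> length x = length y).
    { intros x y Hx Hy. apply HA; apply (nodup_In deq); auto. }
    assert (NA : NoDup A') by apply NoDup_nodup.
    assert (NB : NoDup B') by apply NoDup_nodup.
    clearbody A' B'. clear -HA' NA NB.
    induction A' as [|a A' IH]; simpl; [constructor|].
    inversion NA; subst.
    apply NoDup_app.
    - apply NoDup_map_NoDup_ForallPairs; auto.
      intros y1 y2 _ _ H. apply app_inv_head in H; auto.
    - apply IH; auto. intros; apply HA'; simpl; auto.
    - intros z Hz1 Hz2. apply in_map_iff in Hz1. destruct Hz1 as (y & <- & Hy).
      apply in_flat_map in Hz2. destruct Hz2 as (x & Hx & Hz). apply in_map_iff in Hz.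
      destruct Hz as (y' & Heq & Hy').
      destruct (app_same_length x a y' y) as [-> _]; auto.
      apply HA'; simpl; auto. }
  rewrite card_NoDup by auto. unfold L.
  rewrite (length_flat_map_const _ _ (length B')).
  - reflexivity.
  - intros; apply length_map.
Qed.

Lemma card_union (X S : list word) (F : word -> list word) (k : nat) :
  (forall w, In w X <-> exists v, In v S /\ In w (F v)) ->
  (forall v, In v S -> (card_words (F v) <= k)%nat) ->
  (card_words X <= card_words S * k)%nat.
Proof.
  intros HX HF.
  set (L := flat_map (fun v => nodup deq (F v)) (nodup deq S)).
  apply Nat.le_trans with (card_words L).
  { apply card_incl. intros w Hw. apply HX in Hw. destruct Hw as (v & Hv & Hw).
    unfold L. apply in_flat_map. exists v. split; apply nodup_In; auto. }
  apply Nat.le_trans with (length L). apply card_le_length.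
  unfold L, card_words. apply length_flat_map_le.
  intros v Hv. apply HF. apply (nodup_In deq); auto.
Qed.

Lemma fold_plus_shift (l : list nat) c :
  fold_right Nat.add c l = (fold_right Nat.add 0 l + c)%nat.
Proof. induction l; simpl; lia. Qed.

Lemma nsum_S n f : nsum (S n) f = (nsum n f + f n)%nat.
Proof.
  unfold nsum. rewrite seq_S, map_app, fold_right_app. simpl.
  rewrite fold_plus_shift. lia.
Qed.

Lemma nsum_0 f : nsum 0 f = 0%nat.
Proof. reflexivity. Qed.

Lemma nsum_ext n f g : (forall i, (i < n)%nat -> f i = g i) -> nsum n f = nsum n g.
Proof.
  induction n; intros H; auto. rewrite !nsum_S, IHn, H; auto.
Qed.

Lemma nsum_add n f g : nsum n (fun i => f i + g i)%nat = (nsum n f + nsum n g)%nat.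
Proof. induction n; auto. rewrite !nsum_S, IHn. lia. Qed.

Lemma nsum_mul_l n c f : nsum n (fun i => c * f i)%nat = (c * nsum n f)%nat.
Proof. induction n; simpl; auto. rewrite !nsum_S, IHn. lia. Qed.

Lemma nsum_exchange n m f :
  nsum n (fun i => nsum m (fun j => f i j)) = nsum m (fun j => nsum n (fun i => f i j)).
Proof.
  induction n. - unfold nsum at 1; simpl. induction m; auto. rewrite nsum_S, <- IHm. auto.
  - rewrite nsum_S, IHn, <- nsum_add. apply nsum_ext. intros. rewrite nsum_S. auto.
Qed.

Lemma nsum_delta n x f : (x < n)%nat ->
  nsum n (fun c => (if Nat.eqb x c then 1 else 0) * f c)%nat = f x.
Proof.
  induction n; intros H; [lia|]. rewrite nsum_S.
  destruct (Nat.eq_dec x n).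
  - subst. rewrite Nat.eqb_refl.
    rewrite (nsum_ext _ _ (fun _ => 0%nat)).
    + assert (nsum n (fun _ => 0%nat) = 0%nat) as ->. { clear. induction n; auto. rewrite nsum_S, IHn. auto. }
      lia.
    + intros i Hi. destruct (Nat.eqb_spec n i); lia.
  - rewrite IHn by lia. destruct (Nat.eqb_spec x n); lia.
Qed.

Lemma nsum_le n f g : (forall i, (i < n)%nat -> (f i <= g i)%nat) -> (nsum n f <= nsum n g)%nat.
Proof. induction n; intros H; auto. rewrite !nsum_S. specialize (IHn (fun i Hi => H i ltac:(lia))). specialize (H n ltac:(lia)). lia. Qed.

Lemma nsum_term n f i : (i < n)%nat -> (f i <= nsum n f)%nat.
Proof. induction n; intros H; [lia|]. rewrite nsum_S. destruct (Nat.eq_dec i n); [subst; lia|]. specialize (IHn ltac:(lia)); lia. Qed.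

Lemma occ_cons x u c : occ (x :: u) c = ((if Nat.eqb x c then 1 else 0) + occ u c)%nat.
Proof.
  unfold occ. destruct (Nat.eqb_spec x c).
  - subst. rewrite count_occ_cons_eq; auto.
  - rewrite count_occ_cons_neq; auto.
Qed.

Lemma occ_app u v c : occ (u ++ v) c = (occ u c + occ v c)%nat.
Proof. apply count_occ_app. Qed.


Lemma fold_Rplus_shift (l : list R) c :
  fold_right Rplus c l = fold_right Rplus 0 l + c.
Proof. induction l; simpl; lra. Qed.

Lemma rsum_S n f : rsum (S n) f = rsum n f + f n.
Proof.
  unfold rsum. rewrite seq_S, map_app, fold_right_app. simpl.
  rewrite fold_Rplus_shift. lra.
Qed.

Lemma rsum_0 f : rsum 0 f = 0.
Proof. reflexivity. Qed.

Lemma rsum_ext n f g : (forall i, (i < n)%nat -> f i = g i) -> rsum n f = rsum n g.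
Proof.
  induction n; intros H; auto. rewrite !rsum_S, IHn, H; auto.
Qed.

Lemma rsum_plus n f g : rsum n (fun i => f i + g i) = rsum n f + rsum n g.
Proof. induction n; [unfold rsum; simpl; lra|]. rewrite !rsum_S, IHn. lra. Qed.

Lemma rsum_minus n f g : rsum n (fun i => f i - g i) = rsum n f - rsum n g.
Proof. induction n; [unfold rsum; simpl; lra|]. rewrite !rsum_S, IHn. lra. Qed.

Lemma rsum_scal n c f : rsum n (fun i => c * f i) = c * rsum n f.
Proof. induction n; [unfold rsum; simpl; lra|]. rewrite !rsum_S, IHn. lra. Qed.

Lemma rsum_zero n : rsum n (fun _ => 0) = 0.
Proof. induction n; auto. rewrite rsum_S, IHn. lra. Qed.

Lemma rsum_exchange n m f :
  rsum n (fun i => rsum m (fun j => f i j)) = rsum m (fun j => rsum n (fun i => f i j)).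
Proof.
  induction n.
  - rewrite rsum_0. symmetry. rewrite (rsum_ext _ _ (fun _ => 0)). apply rsum_zero. intros; apply rsum_0.
  - rewrite rsum_S, IHn, <- rsum_plus. apply rsum_ext. intros. rewrite rsum_S. auto.
Qed.

Lemma rsum_le n f g : (forall i, (i < n)%nat -> f i <= g i) -> rsum n f <= rsum n g.
Proof.
  induction n; intros H; [unfold rsum; simpl; lra|]. rewrite !rsum_S.
  specialize (IHn (fun i Hi => H i ltac:(lia))). specialize (H n ltac:(lia)). lra.
Qed.

Lemma rsum_nonneg n f : (forall i, (i < n)%nat -> 0 <= f i) -> 0 <= rsum n f.
Proof. intros H. rewrite <- (rsum_zero n). apply rsum_le. auto. Qed.

Lemma rsum_term n f i : (forall j, (j < n)%nat -> 0 <= f j) -> (i < n)%nat -> f i <= rsum n f.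
Proof.
  induction n; intros H Hi; [lia|]. rewrite rsum_S.
  assert (0 <= rsum n f) by (apply rsum_nonneg; intros; apply H; lia).
  destruct (Nat.eq_dec i n); [subst; lra|].
  specialize (IHn (fun j Hj => H j ltac:(lia)) ltac:(lia)). specialize (H n ltac:(lia)). lra.
Qed.

Lemma rsum_delta n x f : (x < n)%nat ->
  rsum n (fun c => INR (if Nat.eqb x c then 1 else 0) * f c) = f x.
Proof.
  induction n; intros H; [lia|]. rewrite rsum_S.
  destruct (Nat.eq_dec x n).
  - subst. rewrite Nat.eqb_refl.
    rewrite (rsum_ext _ _ (fun _ => 0)). rewrite rsum_zero. simpl; lra.
    intros i Hi. destruct (Nat.eqb_spec n i); [lia|]. simpl; lra.
  - rewrite IHn by lia. destruct (Nat.eqb_spec x n); [lia|]. simpl; lra.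
Qed.

Lemma INR_nsum n f : INR (nsum n f) = rsum n (fun i => INR (f i)).
Proof. induction n; auto. rewrite nsum_S, rsum_S, plus_INR, IHn. auto. Qed.

Lemma ln_le x y : 0 < x -> x <= y -> ln x <= ln y.
Proof. intros H1 [H2|<-]; [left; apply ln_increasing; auto| lra]. Qed.

Lemma ln_nonneg x : 1 <= x -> 0 <= ln x.
Proof. intros H. rewrite <- ln_1. apply ln_le; lra. Qed.

Lemma ln_0 : ln 0 = 0.
Proof. unfold ln. destruct (Rlt_dec 0 0) as [h|h]; [exfalso; exact (Rlt_irrefl 0 h)|reflexivity]. Qed.

Lemma ln_lt_self x : 0 < x -> ln x < x.
Proof.
  intros H. apply exp_lt_inv. rewrite exp_ln by auto.
  destruct (Req_dec x 0); [lra|]. pose proof (exp_ineq1 x H0). lra.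
Qed.

Definition rmin (n : nat) (f : nat -> R) : R := fold_right Rmin (f 0%nat) (map f (seq 0 n)).
Definition rmax (n : nat) (f : nat -> R) : R := fold_right Rmax (f 0%nat) (map f (seq 0 n)).

Lemma fold_min_le (f : nat -> R) d l i : In i l -> fold_right Rmin d (map f l) <= f i.
Proof.
  induction l as [|x l IH]; intros H; [destruct H|]. simpl.
  destruct H as [->|H]; [apply Rmin_l|]. eapply Rle_trans; [apply Rmin_r|auto].
Qed.

Lemma fold_min_att (f : nat -> R) d l :
  fold_right Rmin d (map f l) = d \/ exists i, In i l /\ fold_right Rmin d (map f l) = f i.
Proof.
  induction l as [|x l IH]; simpl; auto.
  destruct (Rle_dec (f x) (fold_right Rmin d (map f l))).
  - rewrite Rmin_left by auto. right; exists x; split; simpl; auto.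
  - rewrite Rmin_right by lra. destruct IH as [E|(i & Hi & E)]; [left; auto|right; exists i; split; simpl; auto].
Qed.

Lemma fold_max_ge (f : nat -> R) d l i : In i l -> f i <= fold_right Rmax d (map f l).
Proof.
  induction l as [|x l IH]; intros H; [destruct H|]. simpl.
  destruct H as [->|H]; [apply Rmax_l|]. eapply Rle_trans; [apply IH; auto|apply Rmax_r].
Qed.

Lemma fold_max_att (f : nat -> R) d l :
  fold_right Rmax d (map f l) = d \/ exists i, In i l /\ fold_right Rmax d (map f l) = f i.
Proof.
  induction l as [|x l IH]; simpl; auto.
  destruct (Rle_dec (f x) (fold_right Rmax d (map f l))).
  - rewrite Rmax_right by auto. destruct IH as [E|(i & Hi & E)]; [left; auto|right; exists i; split; simpl; auto].
  - rewrite Rmax_left by lra. right; exists x; split; simpl; auto.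
Qed.

Lemma rmin_le n f i : (i < n)%nat -> rmin n f <= f i.
Proof. intros H. apply fold_min_le. apply in_seq. lia. Qed.

Lemma rmin_att n f : (1 <= n)%nat -> exists i, (i < n)%nat /\ rmin n f = f i.
Proof.
  intros H. destruct (fold_min_att f (f 0%nat) (seq 0 n)) as [E|(i & Hi & E)].
  - exists 0%nat. split; [lia|auto].
  - exists i. apply in_seq in Hi. split; [lia|auto].
Qed.

Lemma rmax_ge n f i : (i < n)%nat -> f i <= rmax n f.
Proof. intros H. apply fold_max_ge. apply in_seq. lia. Qed.

Lemma rmax_att n f : (1 <= n)%nat -> exists i, (i < n)%nat /\ rmax n f = f i.
Proof.
  intros H. destruct (fold_max_att f (f 0%nat) (seq 0 n)) as [E|(i & Hi & E)].
  - exists 0%nat. split; [lia|auto].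
  - exists i. apply in_seq in Hi. split; [lia|auto].
Qed.

Lemma cv_intro (u : nat -> R) l :
  (forall eps, 0 < eps -> exists N, forall k, (N <= k)%nat -> l - eps < u k < l + eps) -> Un_cv u l.
Proof.
  intros H eps He. destruct (H eps He) as (N & HN). exists N. intros k Hk.
  unfold Rdist. specialize (HN k ltac:(lia)). apply Rabs_def1; lra.
Qed.

Lemma cv_elim (u : nat -> R) l : Un_cv u l ->
  forall eps, 0 < eps -> exists N, forall k, (N <= k)%nat -> l - eps < u k < l + eps.
Proof.
  intros H eps He. destruct (H eps He) as (N & HN). exists N. intros k Hk.
  specialize (HN k ltac:(lia)). unfold Rdist in HN. apply Rabs_def2 in HN. lra.
Qed.

Lemma cv_le_const (u : nat -> R) l x N0 : Un_cv u l -> (forall k, (N0 <= k)%nat -> u k <= x) -> l <= x.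
Proof.
  intros H Hx. destruct (Rle_dec l x) as [|Hn]; auto. exfalso.
  destruct (cv_elim u l H ((l - x) / 2) ltac:(lra)) as (N & HN).
  specialize (HN (N + N0)%nat ltac:(lia)). specialize (Hx (N + N0)%nat ltac:(lia)). lra.
Qed.

Lemma cv_ge_const (u : nat -> R) l x N0 : Un_cv u l -> (forall k, (N0 <= k)%nat -> x <= u k) -> x <= l.
Proof.
  intros H Hx. destruct (Rle_dec x l) as [|Hn]; auto. exfalso.
  destruct (cv_elim u l H ((x - l) / 2) ltac:(lra)) as (N & HN).
  specialize (HN (N + N0)%nat ltac:(lia)). specialize (Hx (N + N0)%nat ltac:(lia)). lra.
Qed.

Lemma cv_le_cv (u v : nat -> R) l1 l2 N0 : Un_cv u l1 -> Un_cv v l2 ->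
  (forall k, (N0 <= k)%nat -> u k <= v k) -> l1 <= l2.
Proof.
  intros H1 H2 Hx. destruct (Rle_dec l1 l2) as [|Hn]; auto. exfalso.
  destruct (cv_elim u l1 H1 ((l1 - l2) / 2) ltac:(lra)) as (N & HN).
  destruct (cv_elim v l2 H2 ((l1 - l2) / 2) ltac:(lra)) as (M & HM).
  specialize (HN (N + M + N0)%nat ltac:(lia)). specialize (HM (N + M + N0)%nat ltac:(lia)).
  specialize (Hx (N + M + N0)%nat ltac:(lia)). lra.
Qed.

Lemma cv_squeeze (lo x hi : nat -> R) l :
  Un_cv lo l -> Un_cv hi l -> (forall k, lo k <= x k <= hi k) -> Un_cv x l.
Proof.
  intros H1 H2 H. apply cv_intro. intros eps He.
  destruct (cv_elim _ _ H1 eps He) as (N & HN). destruct (cv_elim _ _ H2 eps He) as (M & HM).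
  exists (N + M)%nat. intros k Hk. specialize (HN k ltac:(lia)). specialize (HM k ltac:(lia)).
  specialize (H k). lra.
Qed.

Lemma cv_liminf (u : nat -> R) l : Un_cv u l -> is_liminf u l.
Proof.
  intros H eps He. destruct (cv_elim u l H eps He) as (N & HN). split.
  - exists N. intros m Hm. apply HN; auto.
  - intros M. exists (N + M)%nat. split; [lia|]. apply HN; lia.
Qed.

Lemma cv_limsup (u : nat -> R) l : Un_cv u l -> is_limsup u l.
Proof.
  intros H eps He. destruct (cv_elim u l H eps He) as (N & HN). split.
  - exists N. intros m Hm. apply HN; auto.
  - intros M. exists (N + M)%nat. split; [lia|]. apply HN; lia.
Qed.

Lemma ln_small eps : 0 < eps -> exists X, 0 < X /\ forall x, X <= x -> ln x <= eps * x.
Proof.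
  intros He. exists ((2 / eps) ^ 2 + 1). split. { pose proof (pow2_ge_0 (2 / eps)). lra. }
  intros x Hx.
  assert (H2e : 0 < 2 / eps) by (apply Rdiv_lt_0_compat; lra).
  assert (Hx0 : 0 < x) by (pose proof (pow2_ge_0 (2 / eps)); lra).
  assert (Hs : 0 < sqrt x) by (apply sqrt_lt_R0; auto).
  assert (Hsq : sqrt x * sqrt x = x) by (apply sqrt_sqrt; lra).
  assert (Hln : ln x = 2 * ln (sqrt x)).
  { rewrite <- Hsq at 1. rewrite ln_mult by auto. lra. }
  assert (Hl2 : ln (sqrt x) < sqrt x) by (apply ln_lt_self; auto).
  assert (Hge : 2 / eps <= sqrt x).
  { rewrite <- (sqrt_pow2 (2 / eps)) by lra. apply sqrt_le_1_alt. lra. }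
  assert (2 <= eps * sqrt x).
  { apply Rmult_le_compat_l with (r := eps) in Hge; [|lra].
    replace (eps * (2 / eps)) with 2 in Hge by (field; lra). lra. }
  rewrite Hln. rewrite <- Hsq at 2.
  assert (2 * sqrt x <= eps * sqrt x * sqrt x) by nra. nra.
Qed.

Lemma Rdiv_le_0_compat a b : 0 <= a -> 0 < b -> 0 <= a / b.
Proof. intros. unfold Rdiv. apply Rmult_le_pos; auto. left; apply Rinv_0_lt_compat; auto. Qed.

Section Struct.
Variable n : nat.
Variable theta : nat -> list word.
Hypothesis Hrs : is_random_subst n theta.
Hypothesis Hsc : semi_compatible n theta.

Definition P (m : nat) (u : word) : list word := Nat.iter m (subst_set theta) [u].
Definition letters (u : word) : Prop := forall x, In x u -> (x < n)%nat.
Definition Mp := matpow n (subst_matrix theta).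

Lemma sw_app_in w u1 u2 : In w (subst_word theta (u1 ++ u2)) <->
  exists w1 w2, w = w1 ++ w2 /\ In w1 (subst_word theta u1) /\ In w2 (subst_word theta u2).
Proof.
  revert w; induction u1 as [|x u1 IH]; intros w; simpl.
  - split.
    + intros H. exists [], w. simpl; auto.
    + intros (w1 & w2 & -> & [<-|[]] & H2). auto.
  - rewrite in_flat_map. split.
    + intros (v & Hv & Hw). apply in_map_iff in Hw. destruct Hw as (w' & <- & Hw').
      apply IH in Hw'. destruct Hw' as (w1 & w2 & -> & H1 & H2).
      exists (v ++ w1), w2. rewrite app_assoc. split; auto. split; auto.
      apply in_flat_map. exists v. split; auto. apply in_map; auto.
    + intros (w1 & w2 & -> & H1 & H2). apply in_flat_map in H1.
      destruct H1 as (v & Hv & H1). apply in_map_iff in H1. destruct H1 as (w1' & <- & H1).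
      exists v. split; auto. rewrite <- app_assoc. apply in_map. apply IH. eauto.
Qed.

Lemma iter_nil m : Nat.iter m (subst_set theta) [] = [].
Proof. induction m; simpl; auto. rewrite IHm. reflexivity. Qed.

Lemma iter_app m S1 S2 : Nat.iter m (subst_set theta) (S1 ++ S2) =
  Nat.iter m (subst_set theta) S1 ++ Nat.iter m (subst_set theta) S2.
Proof. induction m; simpl; auto. rewrite IHm. unfold subst_set. apply flat_map_app. Qed.

Lemma in_iter m S w : In w (Nat.iter m (subst_set theta) S) <-> exists v, In v S /\ In w (P m v).
Proof.
  induction S as [|v S IH].
  - rewrite iter_nil. simpl. split; [intros []|intros (v & [] & _)].
  - change (v :: S) with ([v] ++ S). rewrite iter_app, in_app_iff, IH. unfold P. split.
    + intros [H|(v' & H1 & H2)]; [exists v; simpl; auto|exists v'; simpl; auto].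
    + intros (v' & [<-|H1] & H2); auto. right; eauto.
Qed.

Lemma in_P0 u w : In w (P 0 u) <-> w = u.
Proof. simpl. split; [intros [<-|[]]; auto| intros ->; auto]. Qed.

Lemma in_PS m u w : In w (P (S m) u) <-> exists v, In v (P m u) /\ In w (subst_word theta v).
Proof. unfold P; simpl. unfold subst_set at 1. apply in_flat_map. Qed.

Lemma in_P_app m u1 u2 w : In w (P m (u1 ++ u2)) <->
  exists w1 w2, w = w1 ++ w2 /\ In w1 (P m u1) /\ In w2 (P m u2).
Proof.
  revert w; induction m; intros w.
  - rewrite in_P0. split.
    + intros ->. exists u1, u2. repeat split; apply in_P0; auto.
    + intros (w1 & w2 & -> & H1 & H2). apply in_P0 in H1; apply in_P0 in H2. subst; auto.
  - rewrite in_PS. split.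
    + intros (v & Hv & Hw). apply IHm in Hv. destruct Hv as (v1 & v2 & -> & H1 & H2).
      apply sw_app_in in Hw. destruct Hw as (w1 & w2 & -> & H3 & H4).
      exists w1, w2. split; auto. split; apply in_PS; eauto.
    + intros (w1 & w2 & -> & H1 & H2). apply in_PS in H1; apply in_PS in H2.
      destruct H1 as (v1 & Hv1 & H1). destruct H2 as (v2 & Hv2 & H2).
      exists (v1 ++ v2). split. apply IHm; eauto. apply sw_app_in; eauto.
Qed.

Lemma in_P_cons m x u w : In w (P m (x :: u)) <->
  exists w1 w2, w = w1 ++ w2 /\ In w1 (P m [x]) /\ In w2 (P m u).
Proof. apply (in_P_app m [x] u). Qed.

Lemma in_P_nil m w : In w (P m []) <-> w = [].
Proof.
  revert w; induction m; intros w. apply in_P0.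
  rewrite in_PS. split.
  - intros (v & Hv & Hw). apply IHm in Hv. subst. simpl in Hw. destruct Hw as [<-|[]]; auto.
  - intros ->. exists []. split. apply IHm; auto. simpl; auto.
Qed.

Lemma in_P_add m k u w : In w (P (m + k) u) <-> exists v, In v (P k u) /\ In w (P m v).
Proof. unfold P at 1. rewrite Nat.iter_add. apply in_iter. Qed.

Lemma in_P1 x w : In w (P 1 [x]) <-> In w (theta x).
Proof.
  rewrite in_PS. split.
  - intros (v & Hv & Hw). apply in_P0 in Hv. subst. simpl in Hw.
    rewrite in_flat_map in Hw. destruct Hw as (v & Hv & [<-|[]]). rewrite app_nil_r; auto.
  - intros H. exists [x]. split. apply in_P0; auto. simpl. apply in_flat_map.
    exists w. split; auto. rewrite app_nil_r; simpl; auto.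
Qed.

Lemma P1_letters v w : letters v -> In w (P 1 v) -> letters w.
Proof.
  revert w; induction v as [|x v IH]; intros w Hv Hw.
  - apply in_P_nil in Hw. subst. intros y [].
  - apply in_P_cons in Hw. destruct Hw as (w1 & w2 & -> & H1 & H2).
    apply in_P1 in H1. intros y Hy. apply in_app_iff in Hy. destruct Hy as [Hy|Hy].
    + assert (x < n)%nat by (apply Hv; simpl; auto).
      destruct (Hrs x H) as [_ Hw]. apply (Hw w1); auto.
    + apply (IH w2); auto. intros z Hz; apply Hv; simpl; auto.
Qed.

Lemma P_letters m v w : letters v -> In w (P m v) -> letters w.
Proof.
  revert v w; induction m; intros v w Hv Hw.
  - apply in_P0 in Hw; subst; auto.
  - rewrite <- Nat.add_1_r in Hw. apply in_P_add in Hw. destruct Hw as (v' & H1 & H2).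
    apply (IHm v'); auto. apply (P1_letters v); auto.
Qed.

Lemma P1_nonempty_words v w : v <> [] -> letters v -> In w (P 1 v) -> w <> [].
Proof.
  destruct v as [|x v]; intros Hne Hv Hw; [congruence|].
  apply in_P_cons in Hw. destruct Hw as (w1 & w2 & -> & H1 & H2). apply in_P1 in H1.
  assert (x < n)%nat by (apply Hv; simpl; auto).
  destruct (Hrs x H) as [_ Hw]. destruct (Hw w1 H1) as [Hne1 _].
  destruct w1; simpl; congruence.
Qed.

Lemma P_nonempty_words m v w : v <> [] -> letters v -> In w (P m v) -> w <> [].
Proof.
  revert v w; induction m; intros v w Hne Hv Hw.
  - apply in_P0 in Hw; subst; auto.
  - rewrite <- Nat.add_1_r in Hw. apply in_P_add in Hw. destruct Hw as (v' & H1 & H2).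
    apply (IHm v'); auto. apply (P1_nonempty_words v); auto. apply (P1_letters v); auto.
Qed.

Lemma P1_exists v : letters v -> exists w, In w (P 1 v).
Proof.
  induction v as [|x v IH]; intros Hv.
  - exists []. apply in_P_nil; auto.
  - destruct IH as (w2 & H2). intros y Hy; apply Hv; simpl; auto.
    assert (x < n)%nat by (apply Hv; simpl; auto).
    destruct (Hrs x H) as [Hne _]. destruct (theta x) as [|w1 t] eqn:E; [congruence|].
    exists (w1 ++ w2). apply in_P_cons. exists w1, w2. split; auto. split; auto.
    apply in_P1. rewrite E; simpl; auto.
Qed.

Lemma P_exists m v : letters v -> exists w, In w (P m v).
Proof.
  revert v; induction m; intros v Hv.
  - exists v. apply in_P0; auto.
  - destruct (P1_exists v Hv) as (v' & Hv').
    destruct (IHm v') as (w & Hw). apply (P1_letters v); auto.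
    exists w. rewrite <- Nat.add_1_r. apply in_P_add. eauto.
Qed.

Lemma length_occ w : letters w -> length w = nsum n (fun b => occ w b).
Proof.
  induction w as [|x w IH]; intros Hw.
  - simpl. unfold nsum. clear. induction (seq 0 n); simpl; auto.
  - cbn [length]. rewrite (nsum_ext _ _ (fun b => ((if Nat.eqb x b then 1 else 0) * 1) + occ w b)%nat).
    + rewrite nsum_add, (nsum_delta n x (fun _ => 1%nat)). rewrite IH. simpl. reflexivity. intros y Hy; apply Hw; simpl; auto.
      apply Hw; simpl; auto.
    + intros i _. rewrite occ_cons. lia.
Qed.

Lemma occ_sw u w b : letters u -> In w (subst_word theta u) ->
  occ w b = nsum n (fun c => occ u c * subst_matrix theta b c)%nat.
Proof.
  revert w; induction u as [|x u IH]; intros w Hu Hw.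
  - simpl in Hw. destruct Hw as [<-|[]]. unfold nsum. simpl. unfold occ. simpl.
    clear. induction (seq 0 n); simpl; auto.
  - change (x :: u) with ([x] ++ u) in Hw. apply sw_app_in in Hw.
    destruct Hw as (w1 & w2 & -> & H1 & H2).
    assert (Hx : (x < n)%nat) by (apply Hu; simpl; auto).
    rewrite occ_app, (IH w2); auto.
    2: intros y Hy; apply Hu; simpl; auto.
    rewrite (nsum_ext _ (fun c => occ (x :: u) c * subst_matrix theta b c)%nat (fun c => ((if Nat.eqb x c then 1 else 0) * subst_matrix theta b c) + occ u c * subst_matrix theta b c)%nat).
    + rewrite nsum_add, nsum_delta by auto. f_equal.
      simpl in H1. rewrite in_flat_map in H1. destruct H1 as (v & Hv & [<-|[]]).
      rewrite app_nil_r. unfold subst_matrix.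
      destruct (Hrs x Hx) as [Hne _]. destruct (theta x) as [|h t] eqn:E; [congruence|].
      simpl. apply (Hsc x Hx); [rewrite E; auto | rewrite E; simpl; auto].
    + intros i _. rewrite occ_cons. lia.
Qed.

Lemma occ_P m v w b : letters v -> In w (P m v) ->
  occ w b = nsum n (fun c => occ v c * Mp m b c)%nat.
Proof.
  revert w b; induction m; intros w b Hv Hw.
  - apply in_P0 in Hw. subst. unfold Mp; cbn [matpow].
    rewrite (nsum_ext n (fun c => occ v c * (if Nat.eqb b c then 1 else 0))%nat (fun c => ((if Nat.eqb b c then 1 else 0) * occ v c)%nat)) by (intros; lia).
    destruct (le_lt_dec n b).
    + rewrite (nsum_ext _ _ (fun _ => 0%nat)).
      * assert (occ v b = 0%nat). { unfold occ. apply count_occ_not_In. intros Hb. apply Hv in Hb. lia. }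
        rewrite H. clear. induction n; auto. rewrite nsum_S, <- IHn0; auto.
      * intros i Hi. destruct (Nat.eqb_spec b i); lia.
    + rewrite nsum_delta; auto.
  - apply in_PS in Hw. destruct Hw as (u & Hu & Hw).
    rewrite (occ_sw u w b); auto. 2: apply (P_letters m v); auto.
    rewrite (nsum_ext _ _ (fun c => nsum n (fun d => occ v d * (Mp m c d * subst_matrix theta b c)))%nat).
    + rewrite nsum_exchange. apply nsum_ext. intros d Hd.
      rewrite nsum_mul_l. f_equal. unfold Mp. simpl. unfold matmul. apply nsum_ext.
      intros; lia.
    + intros c Hc. rewrite (IHm u c); auto. rewrite Nat.mul_comm, <- nsum_mul_l.
      apply nsum_ext; intros; lia.
Qed.

Lemma occ_P1 m a w b : (a < n)%nat -> In w (P m [a]) -> occ w b = Mp m b a.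
Proof.
  intros Ha Hw. rewrite (occ_P m [a] w b); auto.
  - rewrite (nsum_ext _ _ (fun c => ((if Nat.eqb a c then 1 else 0) * Mp m b c)%nat)).
    + apply nsum_delta; auto.
    + intros i _. rewrite occ_cons. simpl. unfold occ; simpl. lia.
  - intros y [<-|[]]; auto.
Qed.

Definition ellP m a := length (hd [] (P m [a])).

Lemma ell_eq m a : ell theta m a = ellP m a.
Proof. reflexivity. Qed.

Lemma length_P1 m a w : (a < n)%nat -> In w (P m [a]) -> length w = ellP m a.
Proof.
  intros Ha Hw. unfold ellP.
  assert (Hl : letters [a]) by (intros y [<-|[]]; auto).
  assert (Hh : In (hd [] (P m [a])) (P m [a])).
  { destruct (P m [a]) as [|h t]; [destruct Hw|]. simpl; auto. }
  rewrite (length_occ w), (length_occ (hd [] (P m [a]))).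
  - apply nsum_ext. intros b _. rewrite (occ_P1 m a w b), (occ_P1 m a _ b); auto.
  - apply (P_letters m [a]); auto.
  - apply (P_letters m [a]); auto.
Qed.

Lemma length_P m v w : letters v -> In w (P m v) ->
  length w = nsum n (fun c => occ v c * ellP m c)%nat.
Proof.
  revert w; induction v as [|x v IH]; intros w Hv Hw.
  - apply in_P_nil in Hw. subst. simpl. unfold nsum. clear. induction (seq 0 n); simpl; auto.
  - apply in_P_cons in Hw. destruct Hw as (w1 & w2 & -> & H1 & H2).
    assert (Hx : (x < n)%nat) by (apply Hv; simpl; auto).
    rewrite length_app, (length_P1 m x w1), (IH w2); auto.
    2: intros y Hy; apply Hv; simpl; auto.
    rewrite (nsum_ext _ (fun c => occ (x :: v) c * ellP m c)%nat (fun c => ((if Nat.eqb x c then 1 else 0) * ellP m c) + occ v c * ellP m c)%nat).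
    + rewrite nsum_add, nsum_delta; auto.
    + intros i _. rewrite occ_cons. lia.
Qed.


Lemma letters_single a : (a < n)%nat -> letters [a].
Proof. intros Ha y [<-|[]]; auto. Qed.

Lemma card_P_pos m v : letters v -> (1 <= card_words (P m v))%nat.
Proof. intros Hv. destruct (P_exists m v Hv) as (w & Hw). eapply card_pos; eauto. Qed.

Lemma card_P_nil m : card_words (P m []) = 1%nat.
Proof.
  rewrite (card_ext _ [[]]). reflexivity.
  intros w. rewrite in_P_nil. simpl. split; [intros ->; auto|intros [<-|[]]; auto].
Qed.

Lemma card_P_cons m x v : letters (x :: v) ->
  card_words (P m (x :: v)) = (card_words (P m [x]) * card_words (P m v))%nat.
Proof.
  intros Hv. apply card_prod.
  - intros w. apply in_P_cons.
  - intros y z Hy Hz. rewrite (length_P1 m x y), (length_P1 m x z); auto; apply Hv; simpl; auto.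
Qed.

Lemma ln_card_P m v : letters v ->
  ln (INR (card_words (P m v))) = rsum n (fun c => INR (occ v c) * q theta m c).
Proof.
  induction v as [|x v IH]; intros Hv.
  - rewrite card_P_nil. simpl. rewrite ln_1. rewrite (rsum_ext _ _ (fun _ => 0)).
    symmetry; apply rsum_zero. intros; unfold occ; simpl; lra.
  - assert (Hx : (x < n)%nat) by (apply Hv; simpl; auto).
    assert (Hv' : letters v) by (intros y Hy; apply Hv; simpl; auto).
    pose proof (card_P_pos m [x] (letters_single x Hx)).
    pose proof (card_P_pos m v Hv').
    rewrite card_P_cons by auto. rewrite mult_INR.
    rewrite ln_mult by (apply lt_0_INR; lia). rewrite IH by auto.
    rewrite (rsum_ext _ (fun c => INR (occ (x :: v) c) * q theta m c)
      (fun c => INR (if Nat.eqb x c then 1 else 0) * q theta m c + INR (occ v c) * q theta m c)).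
    + rewrite rsum_plus, rsum_delta; auto.
    + intros i _. rewrite occ_cons, plus_INR. lra.
Qed.

Lemma card_P_exp m v : letters v ->
  INR (card_words (P m v)) = exp (rsum n (fun c => INR (occ v c) * q theta m c)).
Proof.
  intros Hv. rewrite <- ln_card_P by auto. rewrite exp_ln; auto.
  apply lt_0_INR. pose proof (card_P_pos m v Hv); lia.
Qed.

Definition Mk k c a := INR (Mp k c a).
Definition LL m a := INR (ellP m a).

Lemma q_nonneg m a : (a < n)%nat -> 0 <= q theta m a.
Proof.
  intros Ha. unfold q. apply ln_nonneg. apply (le_INR 1). apply (card_P_pos m [a]).
  apply letters_single; auto.
Qed.

Lemma ell_pos m a : (a < n)%nat -> (1 <= ellP m a)%nat.
Proof.
  intros Ha. destruct (P_exists m [a] (letters_single a Ha)) as (w & Hw).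
  rewrite <- (length_P1 m a w) by auto.
  assert (w <> []) by (apply (P_nonempty_words m [a]); auto; [congruence|apply letters_single; auto]).
  destruct w; simpl; [congruence|lia].
Qed.

Lemma LL_ge1 m a : (a < n)%nat -> 1 <= LL m a.
Proof. intros Ha. unfold LL. apply (le_INR 1). apply ell_pos; auto. Qed.

Lemma occ_Pk k a v c : (a < n)%nat -> In v (P k [a]) -> INR (occ v c) = Mk k c a.
Proof. intros Ha Hv. unfold Mk. rewrite (occ_P1 k a v c); auto. Qed.

Lemma E1 m k a : (a < n)%nat ->
  rsum n (fun c => Mk k c a * q theta m c) <= q theta (m + k) a.
Proof.
  intros Ha. destruct (P_exists k [a] (letters_single a Ha)) as (v & Hv).
  assert (Lv : letters v) by (apply (P_letters k [a]); auto using letters_single).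
  rewrite (rsum_ext _ _ (fun c => INR (occ v c) * q theta m c)).
  2: intros; rewrite (occ_Pk k a v); auto.
  rewrite <- ln_card_P by auto. unfold q. apply ln_le.
  - apply lt_0_INR. pose proof (card_P_pos m v Lv); lia.
  - apply le_INR. apply card_incl. intros w Hw. apply in_P_add. eauto.
Qed.

Lemma E2 m k a : (a < n)%nat ->
  q theta (m + k) a <= q theta k a + rsum n (fun c => Mk k c a * q theta m c).
Proof.
  intros Ha. destruct (P_exists k [a] (letters_single a Ha)) as (v0 & Hv0).
  assert (Lv0 : letters v0) by (apply (P_letters k [a]); auto using letters_single).
  assert (Hb : (card_words (subst_pow theta (m + k) a) <=
               card_words (P k [a]) * card_words (P m v0))%nat).
  { apply (card_union _ _ (P m)).
    - intros w. apply in_P_add.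
    - intros v Hv. assert (Lv : letters v) by (apply (P_letters k [a]); auto using letters_single).
      apply INR_le. rewrite !card_P_exp by auto. right. f_equal. apply rsum_ext.
      intros c _. rewrite (occ_Pk k a v c), (occ_Pk k a v0 c); auto. }
  rewrite (rsum_ext _ _ (fun c => INR (occ v0 c) * q theta m c)).
  2: intros; rewrite (occ_Pk k a v0); auto.
  rewrite <- ln_card_P by auto.
  pose proof (card_P_pos k [a] (letters_single a Ha)).
  pose proof (card_P_pos m v0 Lv0).
  pose proof (card_P_pos (m + k) [a] (letters_single a Ha)).
  unfold q, subst_pow. unfold P in *. rewrite <- ln_mult; [| apply lt_0_INR; apply Nat.lt_le_trans with 1%nat; [lia|assumption] ..].
  apply ln_le.
  - apply lt_0_INR. apply Nat.lt_le_trans with 1%nat; [lia|assumption].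
  - rewrite <- mult_INR. apply le_INR; auto.
Qed.

Lemma E3 m k a : (a < n)%nat -> LL (m + k) a = rsum n (fun c => Mk k c a * LL m c).
Proof.
  intros Ha. destruct (P_exists (m + k) [a] (letters_single a Ha)) as (w & Hw).
  unfold LL. rewrite <- (length_P1 (m + k) a w) by auto.
  apply in_P_add in Hw. destruct Hw as (v & Hv & Hw).
  assert (Lv : letters v) by (apply (P_letters k [a]); auto using letters_single).
  rewrite (length_P m v w), INR_nsum by auto. apply rsum_ext. intros c _.
  rewrite mult_INR, (occ_Pk k a v c); auto.
Qed.

Lemma LL0 a : (a < n)%nat -> LL 0 a = 1.
Proof.
  intros Ha. unfold LL. rewrite <- (length_P1 0 a [a]); auto. apply in_P0; auto.
Qed.

Hypothesis Hn : (1 <= n)%nat.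
Variable lam : R.
Variable Rv : nat -> R.
Hypothesis HPF : PF_pair n (subst_matrix theta) lam Rv.

Lemma Rpos i : (i < n)%nat -> 0 < Rv i.
Proof. destruct HPF as [H _]. auto. Qed.

Lemma Rsum1 : rsum n Rv = 1.
Proof. destruct HPF as [_ [H _]]. auto. Qed.

Lemma Rle1 i : (i < n)%nat -> Rv i <= 1.
Proof. intros Hi. rewrite <- Rsum1. apply rsum_term; auto. intros; left; apply Rpos; auto. Qed.

Lemma E5 k b : (b < n)%nat -> rsum n (fun a => Mk k b a * Rv a) = lam ^ k * Rv b.
Proof.
  revert b; induction k; intros b Hb.
  - unfold Mk, Mp. cbn [matpow]. rewrite rsum_delta by auto. simpl; lra.
  - unfold Mk, Mp. cbn [matpow]. unfold matmul.
    rewrite (rsum_ext _ _ (fun a => rsum n (fun c => INR (subst_matrix theta b c) * (Mk k c a * Rv a)))).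
    + rewrite rsum_exchange.
      rewrite (rsum_ext _ _ (fun c => INR (subst_matrix theta b c) * (lam ^ k * Rv c))).
      * rewrite (rsum_ext _ _ (fun c => lam ^ k * (INR (subst_matrix theta b c) * Rv c))) by (intros; lra).
        rewrite rsum_scal. destruct HPF as [_ [_ H3]]. rewrite H3 by auto. simpl; lra.
      * intros c Hc. rewrite rsum_scal, IHk; auto.
    + intros a _. rewrite INR_nsum. rewrite Rmult_comm, <- rsum_scal. apply rsum_ext.
      intros c _. rewrite mult_INR. unfold Mk, Mp. lra.
Qed.

Lemma E6 k : rsum n (fun a => LL k a * Rv a) = lam ^ k.
Proof.
  rewrite (rsum_ext _ _ (fun a => rsum n (fun c => Mk k c a * Rv a))).
  - rewrite rsum_exchange. rewrite (rsum_ext _ _ (fun c => lam ^ k * Rv c)).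
    + rewrite rsum_scal, Rsum1. lra.
    + intros; apply E5; auto.
  - intros a Ha. replace k with (0 + k)%nat at 1 by lia. rewrite E3 by auto.
    rewrite Rmult_comm, <- rsum_scal. apply rsum_ext. intros c Hc. rewrite LL0 by auto. lra.
Qed.

Definition aa m := qR n theta Rv m.

Lemma aa_nonneg m : 0 <= aa m.
Proof.
  unfold aa, qR. apply rsum_nonneg. intros i Hi.
  apply Rmult_le_pos; [apply q_nonneg; auto|left; apply Rpos; auto].
Qed.

Lemma E7 m k : lam ^ k * aa m <= aa (m + k).
Proof.
  unfold aa, qR. apply Rle_trans with (rsum n (fun a => rsum n (fun c => Mk k c a * q theta m c) * Rv a)).
  - rewrite (rsum_ext _ (fun a => rsum n (fun c => Mk k c a * q theta m c) * Rv a)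
       (fun a => rsum n (fun c => q theta m c * (Mk k c a * Rv a)))).
    + rewrite rsum_exchange. rewrite <- rsum_scal. right. apply rsum_ext. intros c Hc.
      rewrite rsum_scal, E5 by auto. lra.
    + intros a _. rewrite Rmult_comm, <- rsum_scal. apply rsum_ext; intros; lra.
  - apply rsum_le. intros a Ha. apply Rmult_le_compat_r; [left; apply Rpos; auto|]. apply E1; auto.
Qed.

Lemma E8 m k : aa (m + k) <= aa k + lam ^ k * aa m.
Proof.
  unfold aa, qR. apply Rle_trans with (rsum n (fun a => (q theta k a + rsum n (fun c => Mk k c a * q theta m c)) * Rv a)).
  - apply rsum_le. intros a Ha. apply Rmult_le_compat_r; [left; apply Rpos; auto|]. apply E2; auto.
  - right. rewrite (rsum_ext _ _ (fun a => q theta k a * Rv a + rsum n (fun c => q theta m c * (Mk k c a * Rv a)))).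
    + rewrite rsum_plus. f_equal. rewrite rsum_exchange, <- rsum_scal. apply rsum_ext. intros c Hc.
      rewrite rsum_scal, E5 by auto. lra.
    + intros a _. rewrite Rmult_plus_distr_r. f_equal. rewrite Rmult_comm, <- rsum_scal.
      apply rsum_ext; intros; lra.
Qed.

Lemma lam_ge1 : 1 <= lam.
Proof.
  pose proof (E6 1). simpl in H. rewrite Rmult_1_r in H. rewrite <- H, <- Rsum1.
  apply rsum_le. intros i Hi. pose proof (LL_ge1 1 i Hi). pose proof (Rpos i Hi). nra.
Qed.

Definition rr N i := q theta N i / LL N i.
Definition gg N := rmin n (rr N).
Definition GG N := rmax n (rr N).

Lemma rr_eq N i : infl_seq theta i N = rr N i.
Proof. reflexivity. Qed.

Lemma q_rr N i : (i < n)%nat -> q theta N i = rr N i * LL N i.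
Proof. intros Hi. unfold rr. field. pose proof (LL_ge1 N i Hi). lra. Qed.

Lemma rr_nonneg N i : (i < n)%nat -> 0 <= rr N i.
Proof. intros Hi. unfold rr. apply Rdiv_le_0_compat. apply q_nonneg; auto. pose proof (LL_ge1 N i Hi); lra. Qed.

Lemma gg_le N i : (i < n)%nat -> gg N <= rr N i.
Proof. apply rmin_le. Qed.

Lemma GG_ge N i : (i < n)%nat -> rr N i <= GG N.
Proof. apply rmax_ge. Qed.

Lemma gg_nonneg N : 0 <= gg N.
Proof. destruct (rmin_att n (rr N) Hn) as (i & Hi & E). unfold gg. rewrite E. apply rr_nonneg; auto. Qed.

Lemma gg_le_GG N : gg N <= GG N.
Proof. eapply Rle_trans; [apply (gg_le N 0)|apply GG_ge]; lia. Qed.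

Lemma q_ge_gg N i : (i < n)%nat -> gg N * LL N i <= q theta N i.
Proof.
  intros Hi. rewrite q_rr by auto. apply Rmult_le_compat_r. pose proof (LL_ge1 N i Hi); lra.
  apply gg_le; auto.
Qed.

Lemma q_le_GG N i : (i < n)%nat -> q theta N i <= GG N * LL N i.
Proof.
  intros Hi. rewrite q_rr by auto. apply Rmult_le_compat_r. pose proof (LL_ge1 N i Hi); lra.
  apply GG_ge; auto.
Qed.

Lemma gg_mono N : gg N <= gg (S N).
Proof.
  destruct (rmin_att n (rr (S N)) Hn) as (i & Hi & E). unfold gg at 2. rewrite E.
  unfold rr. apply Rmult_le_reg_r with (LL (S N) i). pose proof (LL_ge1 (S N) i Hi); lra.
  unfold Rdiv. rewrite Rmult_assoc, Rinv_l, Rmult_1_r by (pose proof (LL_ge1 (S N) i Hi); lra).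
  replace (S N) with (N + 1)%nat by lia. rewrite E3 by auto.
  eapply Rle_trans; [|apply E1; auto]. rewrite <- rsum_scal. apply rsum_le. intros c Hc.
  pose proof (q_ge_gg N c Hc). assert (0 <= Mk 1 c i) by (apply pos_INR). nra.
Qed.

Lemma gg_aa N : gg N * lam ^ N <= aa N.
Proof.
  rewrite <- E6, <- rsum_scal. unfold aa, qR. apply rsum_le. intros i Hi.
  pose proof (q_ge_gg N i Hi). pose proof (Rpos i Hi). nra.
Qed.

Lemma aa_GG N : aa N <= GG N * lam ^ N.
Proof.
  rewrite <- E6, <- rsum_scal. unfold aa, qR. apply rsum_le. intros i Hi.
  pose proof (q_le_GG N i Hi). pose proof (Rpos i Hi). nra.
Qed.

Definition bb m := aa m / lam ^ m.

Lemma lam_pow_pos k : 0 < lam ^ k.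
Proof. apply pow_lt. pose proof lam_ge1; lra. Qed.

Lemma bb_mono m k : bb m <= bb (m + k).
Proof.
  unfold bb. rewrite pow_add. pose proof (lam_pow_pos m). pose proof (lam_pow_pos k).
  pose proof (E7 m k). apply Rmult_le_reg_r with (lam ^ m * lam ^ k). nra.
  unfold Rdiv. rewrite !Rmult_assoc.
  rewrite Rinv_l by nra. rewrite Rmult_1_r.
  replace (/ lam ^ m * (lam ^ m * lam ^ k)) with (lam ^ k) by (field; lra). nra.
Qed.

Lemma gg_bb N : gg N <= bb N.
Proof.
  unfold bb. pose proof (lam_pow_pos N). apply Rmult_le_reg_r with (lam ^ N); auto.
  unfold Rdiv. rewrite Rmult_assoc, Rinv_l, Rmult_1_r by lra. apply gg_aa.
Qed.

Lemma bb_GG N : bb N <= GG N.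
Proof.
  unfold bb. pose proof (lam_pow_pos N). apply Rmult_le_reg_r with (lam ^ N); auto.
  unfold Rdiv. rewrite Rmult_assoc, Rinv_l, Rmult_1_r by lra. apply aa_GG.
Qed.

Lemma bb_nonneg m : 0 <= bb m.
Proof. unfold bb. apply Rdiv_le_0_compat. apply aa_nonneg. apply lam_pow_pos. Qed.

Lemma aa_mult_bound m j : (1 <= m)%nat -> 1 < lam ->
  aa (j * m) <= aa m / (lam ^ m - 1) * lam ^ (j * m).
Proof.
  intros Hm Hl. assert (HX : 1 < lam ^ m).
  { destruct m; [lia|]. simpl. pose proof (Rle_pow lam 0 m ltac:(lra) ltac:(lia)). simpl in H. nra. }
  set (U := aa m / (lam ^ m - 1)).
  assert (HU : U * (lam ^ m - 1) = aa m) by (unfold U; field; lra).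
  assert (HU0 : 0 <= U) by (unfold U; apply Rdiv_le_0_compat; [apply aa_nonneg|lra]).
  induction j.
  - simpl. pose proof (E7 0 m). simpl in H. rewrite Rmult_1_r.
    pose proof (aa_nonneg 0). pose proof (aa_nonneg m). nra.
  - replace (S j * m)%nat with (m + j * m)%nat by lia.
    rewrite pow_add. pose proof (E8 m (j * m)). pose proof (lam_pow_pos (j * m)).
    pose proof (aa_nonneg m). nra.
Qed.

Lemma bb_bound m k : (1 <= m)%nat -> 1 < lam -> bb k <= aa m / (lam ^ m - 1).
Proof.
  intros Hm Hl. apply Rle_trans with (bb (k * m)).
  - replace (k * m)%nat with (k + (k * m - k))%nat by nia. apply bb_mono.
  - unfold bb. pose proof (lam_pow_pos (k * m)). pose proof (aa_mult_bound m k Hm Hl).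
    apply Rmult_le_reg_r with (lam ^ (k * m)); auto. unfold Rdiv at 1.
    rewrite Rmult_assoc, Rinv_l, Rmult_1_r by lra. auto.
Qed.

Lemma gg_cv : 1 < lam -> { g | Un_cv gg g }.
Proof.
  intros Hl. apply growing_cv.
  - intros N. apply gg_mono.
  - exists (aa 1 / (lam ^ 1 - 1)). intros x (N & ->).
    eapply Rle_trans; [apply gg_bb|]. apply bb_bound; auto.
Qed.


Fixpoint words (k : nat) : list word :=
  match k with
  | O => [ [] ]
  | S k => flat_map (fun x => map (cons x) (words k)) (seq 0 n)
  end.

Lemma in_words k v : In v (words k) <-> length v = k /\ letters v.
Proof.
  revert v; induction k; intros v; simpl.
  - split; [intros [<-|[]]; split; [auto|intros y []]|].
    intros [H _]. destruct v; [auto|simpl in H; lia].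
  - rewrite in_flat_map. split.
    + intros (x & Hx & Hv). apply in_map_iff in Hv. destruct Hv as (v' & <- & Hv').
      apply IHk in Hv'. destruct Hv' as [H1 H2]. apply in_seq in Hx. simpl. split; [lia|].
      intros y [<-|Hy]; [lia|auto].
    + intros [H1 H2]. destruct v as [|x v]; [simpl in H1; lia|]. exists x. split.
      * apply in_seq. assert (x < n)%nat by (apply H2; simpl; auto). lia.
      * apply in_map. apply IHk. simpl in H1. split; [lia|]. intros y Hy; apply H2; simpl; auto.
Qed.

Lemma length_words k : length (words k) = (n ^ k)%nat.
Proof.
  induction k; simpl; auto.
  rewrite (length_flat_map_const _ _ (n ^ k)).
  - rewrite length_seq. auto.
  - intros; rewrite length_map; auto.
Qed.

Definition allw (R : nat) : list word := flat_map words (seq 0 (S R)).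

Lemma in_allw R v : In v (allw R) <-> (length v <= R)%nat /\ letters v.
Proof.
  unfold allw. rewrite in_flat_map. split.
  - intros (k & Hk & Hv). apply in_seq in Hk. apply in_words in Hv. destruct Hv. split; [lia|auto].
  - intros [H1 H2]. exists (length v). split. apply in_seq; lia. apply in_words; auto.
Qed.

Lemma length_allw R : (length (allw R) <= S R * n ^ R)%nat.
Proof.
  unfold allw. replace (S R) with (length (seq 0 (S R))) at 2 by apply length_seq.
  apply length_flat_map_le. intros k Hk. apply in_seq in Hk. rewrite length_words.
  apply Nat.pow_le_mono_r; lia.
Qed.

Definition Ls N := nsum n (fun j => ellP N j).
Definition Bd N := nsum N (fun m => nsum n (fun a => ellP m a)).
Definition wlen N v := nsum n (fun c => occ v c * ellP N c)%nat.

Lemma ell_le_Ls N x : (x < n)%nat -> (ellP N x <= Ls N)%nat.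
Proof. intros; apply (nsum_term n (fun j => ellP N j)); auto. Qed.

Lemma cover N u : u <> [] -> forall k v w pr sf, (length v <= k)%nat -> letters v ->
  In w (P N v) -> w = pr ++ u ++ sf ->
  exists v' w' pr' sf', letters v' /\ In w' (P N v') /\ w' = pr' ++ u ++ sf' /\
    (length pr' < Ls N)%nat /\ (length sf' < Ls N)%nat.
Proof.
  intros Hu k. induction k; intros v w pr sf Hk Hv Hw Hwe.
  - destruct v; [|simpl in Hk; lia]. apply in_P_nil in Hw. subst.
    destruct pr; destruct u; simpl in *; congruence.
  - destruct (le_lt_dec (Ls N) (length pr)) as [Hp|Hp].
    + destruct v as [|x v1].
      { apply in_P_nil in Hw. subst. destruct pr; destruct u; simpl in *; congruence. }
      assert (Hx : (x < n)%nat) by (apply Hv; simpl; auto).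
      assert (Hv1 : letters v1) by (intros y Hy; apply Hv; simpl; auto).
      apply in_P_cons in Hw. destruct Hw as (w1 & w2 & -> & H1 & H2).
      pose proof (length_P1 N x w1 Hx H1). pose proof (ell_le_Ls N x Hx).
      apply app_eq_app in Hwe. destruct Hwe as (l & [[E1 E2]|[E1 E2]]).
      * assert (l = []) by (destruct l; auto; subst; rewrite length_app in *; simpl in *; lia).
        subst l. simpl in E2. apply (IHk v1 w2 [] sf); auto. simpl in Hk; lia.
      * apply (IHk v1 w2 l sf); auto. simpl in Hk; lia.
    + destruct (le_lt_dec (Ls N) (length sf)) as [Hs|Hs].
      * destruct v as [|x v0].
        { apply in_P_nil in Hw. subst. destruct pr; destruct u; simpl in *; congruence. }
        destruct (exists_last (l := x :: v0)) as (v1 & y & Ev); [congruence|].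
        rewrite Ev in Hw, Hv, Hk.
        assert (Hy : (y < n)%nat) by (apply Hv; apply in_app_iff; simpl; auto).
        assert (Hv1 : letters v1) by (intros z Hz; apply Hv; apply in_app_iff; auto).
        apply in_P_app in Hw. destruct Hw as (w1 & w2 & -> & H1 & H2).
        pose proof (length_P1 N y w2 Hy H2). pose proof (ell_le_Ls N y Hy).
        rewrite app_assoc in Hwe.
        apply app_eq_app in Hwe. destruct Hwe as (l & [[E1 E2]|[E1 E2]]).
        -- apply (IHk v1 w1 pr l); auto. rewrite length_app in Hk; simpl in Hk; lia.
           rewrite E1, <- app_assoc; auto.
        -- assert (l = []) by (destruct l; auto; subst; rewrite length_app in *; simpl in *; lia).
           subst l. rewrite app_nil_r in E1.
           apply (IHk v1 w1 pr []); auto. rewrite length_app in Hk; simpl in Hk; lia.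
           rewrite app_nil_r; auto.
      * exists v, w, pr, sf. auto.
Qed.

Lemma skipn_length_app (pr x : word) : skipn (length pr) (pr ++ x) = x.
Proof. induction pr; simpl; auto. Qed.

Lemma firstn_length_app (u s : word) : firstn (length u) (u ++ s) = u.
Proof. induction u; simpl; auto. f_equal; auto. Qed.

Definition Tlist N l Lmin : list word :=
  let Z := (l + 2 * Ls N)%nat in
  flat_map (fun v => flat_map (fun w => map (fun o => firstn l (skipn o w)) (seq 0 (S Z)))
                               (nodup deq (P N v)))
           (filter (fun v => Nat.leb (wlen N v) Z) (allw (Z / Lmin))).

Lemma lang_in_T N l Lmin u : (1 <= Lmin)%nat -> (forall j, (j < n)%nat -> (Lmin <= ellP N j)%nat) ->
  (Bd N < l)%nat -> lang n theta l u -> In u (Tlist N l Lmin).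
Proof.
  intros HL1 HL Hl (Hlen & m & a & w0 & Ha & Hw0 & pr & sf & Hwe).
  assert (HmN : (N <= m)%nat).
  { destruct (le_lt_dec N m); auto. exfalso.
    assert (length w0 = ellP m a) by (apply (length_P1 m a w0); auto).
    assert (ellP m a <= Bd N)%nat.
    { unfold Bd. eapply Nat.le_trans; [|apply (nsum_term N (fun m => nsum n (fun a => ellP m a)) m); auto].
      apply (nsum_term n (fun a => ellP m a)); auto. }
    subst w0. rewrite !length_app in H. lia. }
  replace m with (N + (m - N))%nat in Hw0 by lia.
  apply in_P_add in Hw0. destruct Hw0 as (v0 & Hv0 & Hw0).
  assert (Lv0 : letters v0) by (apply (P_letters (m - N) [a]); auto using letters_single).
  assert (Hu : u <> []) by (intros ->; simpl in Hlen; unfold Bd in Hl; lia).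
  destruct (cover N u Hu (length v0) v0 w0 pr sf (le_n _) Lv0 Hw0 Hwe)
    as (v & w & pr' & sf' & Lv & Hw & -> & Hpr & Hsf).
  assert (Hwl : length (pr' ++ u ++ sf') = wlen N v) by (apply (length_P N v); auto).
  rewrite !length_app in Hwl.
  unfold Tlist. apply in_flat_map. exists v. split.
  - apply filter_In. split.
    + apply in_allw. split; auto. apply Nat.div_le_lower_bound; [lia|].
      rewrite (length_occ v Lv). rewrite <- nsum_mul_l. eapply Nat.le_trans.
      * apply (nsum_le n _ (fun c => occ v c * ellP N c)%nat). intros c Hc.
        specialize (HL c Hc). nia.
      * fold (wlen N v). lia.
    + apply Nat.leb_le. lia.
  - apply in_flat_map. exists (pr' ++ u ++ sf'). split. apply nodup_In; auto.
    apply in_map_iff. exists (length pr'). split.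
    + rewrite skipn_length_app, <- Hlen. apply firstn_length_app.
    + apply in_seq. lia.
Qed.

Lemma c_le_T N l Lmin (c : nat) : (1 <= Lmin)%nat -> (forall j, (j < n)%nat -> (Lmin <= ellP N j)%nat) ->
  (Bd N < l)%nat -> has_card (lang n theta l) c -> (c <= length (Tlist N l Lmin))%nat.
Proof.
  intros H1 H2 H3 (L & HND & HL & Hc). subst c. apply NoDup_incl_length; auto.
  intros u Hu. apply HL in Hu. apply lang_in_T; auto.
Qed.

Lemma exp_mono x y : x <= y -> exp x <= exp y.
Proof. intros [H|<-]; [left; apply exp_increasing; auto|lra]. Qed.

Lemma GG_nonneg N : 0 <= GG N.
Proof. pose proof (gg_nonneg N); pose proof (gg_le_GG N); lra. Qed.

Lemma T_bound N l Lmin :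
  INR (length (Tlist N l Lmin)) <=
  INR (S ((l + 2 * Ls N) / Lmin)) * INR n ^ ((l + 2 * Ls N) / Lmin) *
  (exp (GG N * INR (l + 2 * Ls N)) * INR (S (l + 2 * Ls N))).
Proof.
  unfold Tlist. set (Z := (l + 2 * Ls N)%nat). set (R := (Z / Lmin)%nat).
  eapply Rle_trans; [apply length_flat_map_leR|].
  - intros v Hv. apply filter_In in Hv. destruct Hv as [Hv Hle]. apply in_allw in Hv.
    destruct Hv as [_ Lv]. apply Nat.leb_le in Hle.
    rewrite (length_flat_map_const _ _ (S Z)).
    2: { intros; rewrite length_map, length_seq; auto. }
    rewrite mult_INR. apply Rmult_le_compat_r; [apply pos_INR|].
    change (INR (length (nodup deq (P N v)))) with (INR (card_words (P N v))).
    rewrite card_P_exp by auto. apply exp_mono.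
    apply Rle_trans with (rsum n (fun c => INR (occ v c) * (GG N * LL N c))).
    + apply rsum_le. intros c Hc. apply Rmult_le_compat_l; [apply pos_INR|]. apply q_le_GG; auto.
    + rewrite (rsum_ext _ _ (fun c => GG N * INR (occ v c * ellP N c)%nat)).
      2: { intros c _. rewrite mult_INR. unfold LL. ring. }
      rewrite rsum_scal, <- INR_nsum. apply Rmult_le_compat_l. apply GG_nonneg.
      apply le_INR. apply Hle.
  - apply Rmult_le_compat_r.
    + apply Rmult_le_pos. left; apply exp_pos. apply pos_INR.
    + rewrite <- pow_INR, <- mult_INR. apply le_INR.
      eapply Nat.le_trans; [apply filter_length_le|apply length_allw].
Qed.

Lemma card_le_c N i (c : nat -> nat) : (i < n)%nat ->
  (forall l, has_card (lang n theta l) (c l)) -> (card_words (P N [i]) <= c (ellP N i))%nat.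
Proof.
  intros Hi Hc. destruct (Hc (ellP N i)) as (L & HND & HL & Hlen). rewrite <- Hlen.
  apply NoDup_incl_length. apply NoDup_nodup. intros w Hw. apply nodup_In in Hw. apply HL.
  split. apply (length_P1 N i w); auto.
  exists N, i, w. split; auto. split; auto. exists [], []. rewrite app_nil_r; auto.
Qed.

Lemma le_eps_le x y : (forall eps, 0 < eps -> x <= y + eps) -> x <= y.
Proof.
  intros H. destruct (Rle_dec x y); auto. specialize (H ((x - y) / 2) ltac:(lra)). lra.
Qed.

Lemma s_bound N Lmin (c : nat -> nat) s : (1 <= Lmin)%nat ->
  (forall j, (j < n)%nat -> (Lmin <= ellP N j)%nat) ->
  (forall l, has_card (lang n theta l) (c l)) ->
  Un_cv (fun l => ln (INR (c l)) / INR l) s ->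
  s <= ln (INR n) / INR Lmin + GG N.
Proof.
  intros HL1 HL Hc Hs.
  set (B := ln (INR n) / INR Lmin + GG N).
  assert (HLm : 1 <= INR Lmin) by (apply (le_INR 1); auto).
  assert (HnR : 1 <= INR n) by (apply (le_INR 1); auto).
  assert (HB : 0 <= B).
  { unfold B. pose proof (GG_nonneg N). assert (0 <= ln (INR n)) by (apply ln_nonneg; auto).
    assert (0 <= ln (INR n) / INR Lmin) by (apply Rdiv_le_0_compat; lra). lra. }
  apply le_eps_le. intros eta He.
  destruct (ln_small (eta / 8)) as (X & HX & HXs). lra.
  set (LsR := INR (Ls N)).
  assert (HLs : 0 <= LsR) by apply pos_INR.
  destruct (INR_unbounded (X + 4 * LsR * B / eta)) as (k & Hk).
  set (L0 := (k + Bd N + 2 * Ls N + 1)%nat).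
  apply (cv_le_const _ s (B + eta) L0 Hs). intros l Hl.
  assert (HlR : INR k + INR (Bd N) + 2 * LsR + 1 <= INR l).
  { assert (INR (k + Bd N + 2 * Ls N + 1) <= INR l) by (apply le_INR; unfold L0 in Hl; lia).
    rewrite !plus_INR, mult_INR in H. replace (INR 2) with 2 in H by (simpl; lra).
    unfold LsR. simpl in H. lra. }
  assert (H4 : 0 <= 4 * LsR * B / eta) by (apply Rdiv_le_0_compat; [nra|lra]).
  assert (HBd : 0 <= INR (Bd N)) by apply pos_INR.
  assert (Hl0 : 0 < INR l) by lra.
  set (Z := (l + 2 * Ls N)%nat). set (R := (Z / Lmin)%nat).
  assert (HZ : INR Z = INR l + 2 * LsR).
  { unfold Z, LsR. rewrite plus_INR, mult_INR. simpl. lra. }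
  assert (HcT := c_le_T N l Lmin (c l) HL1 HL ltac:(unfold L0 in Hl; lia) (Hc l)).
  pose proof (T_bound N l Lmin) as HT. fold Z R in HT.
  set (Q := INR (S R) * INR n ^ R * (exp (GG N * INR Z) * INR (S Z))).
  assert (HSR : 1 <= INR (S R)) by (apply (le_INR 1); lia).
  assert (HSZ : 1 <= INR (S Z)) by (apply (le_INR 1); lia).
  assert (Hnp : 1 <= INR n ^ R) by (pose proof (Rle_pow (INR n) 0 R HnR ltac:(lia)); simpl in H; lra).
  assert (Hex : 1 <= exp (GG N * INR Z)).
  { rewrite <- exp_0. apply exp_mono. pose proof (GG_nonneg N). pose proof (pos_INR Z). nra. }
  assert (HQ1 : 1 <= Q).
  { unfold Q. assert (1 <= exp (GG N * INR Z) * INR (S Z)) by nra.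
    assert (1 <= INR (S R) * INR n ^ R) by nra. nra. }
  assert (HcQ : INR (c l) <= Q) by (eapply Rle_trans; [apply le_INR; apply HcT|apply HT]).
  assert (Hlnc : ln (INR (c l)) <= ln Q).
  { destruct (Nat.eq_dec (c l) 0) as [E|E].
    - rewrite E. simpl. rewrite ln_0. apply ln_nonneg; auto.
    - apply ln_le; auto. apply lt_0_INR. lia. }
  assert (HlnQ : ln Q = ln (INR (S R)) + INR R * ln (INR n) + GG N * INR Z + ln (INR (S Z))).
  { unfold Q. rewrite !ln_mult by (first [apply exp_pos | nra]).
    rewrite ln_pow, ln_exp by lra. lra. }
  assert (HRZ : (Lmin * R <= Z)%nat) by (unfold R; apply Nat.mul_div_le; lia).
  assert (HRZ' : (R <= Z)%nat) by nia.
  assert (HlnR : ln (INR (S R)) <= ln (INR (S Z))) by (apply ln_le; [lra|apply le_INR; lia]).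
  assert (HRr : INR R * INR Lmin <= INR Z).
  { rewrite <- mult_INR. apply le_INR. lia. }
  assert (HSZ2 : INR (S Z) <= 2 * INR l).
  { rewrite S_INR, HZ. lra. }
  assert (Hln2 : ln (INR (S Z)) <= eta / 8 * (2 * INR l)).
  { eapply Rle_trans; [apply ln_le; [lra|apply HSZ2]|]. apply HXs. lra. }
  assert (HlnnR : INR R * ln (INR n) <= INR Z * (ln (INR n) / INR Lmin)).
  { assert (0 <= ln (INR n)) by (apply ln_nonneg; auto).
    apply Rmult_le_reg_r with (INR Lmin); [lra|].
    replace (INR Z * (ln (INR n) / INR Lmin) * INR Lmin) with (INR Z * ln (INR n)) by (field; lra).
    nra. }
  assert (Hmain : ln (INR (c l)) <= eta / 2 * INR l + INR Z * B).
  { unfold B. rewrite Rmult_plus_distr_l. lra. }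
  assert (HLB : 2 * LsR * B <= eta / 2 * INR l).
  { assert (4 * LsR * B / eta <= INR l) by lra.
    apply Rmult_le_compat_l with (r := eta / 2) in H; [|lra].
    replace (eta / 2 * (4 * LsR * B / eta)) with (2 * LsR * B) in H by (field; lra). lra. }
  apply Rmult_le_reg_r with (INR l); auto.
  replace (ln (INR (c l)) / INR l * INR l) with (ln (INR (c l))) by (field; lra).
  rewrite HZ in Hmain. nra.
Qed.

Hypothesis Hprim : primitive_mat n (subst_matrix theta).

Section Contr.
Variable p : nat.
Hypothesis Hp1 : (1 <= p)%nat.
Hypothesis Hpos : forall i j, (i < n)%nat -> (j < n)%nat -> (0 < Mp p i j)%nat.

Definition KK := rsum n (fun j => rsum n (fun a => Mk p j a)).
Definition SS N := rsum n (fun c => LL N c).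

Lemma Mk_ge1 j a : (j < n)%nat -> (a < n)%nat -> 1 <= Mk p j a.
Proof. intros. unfold Mk. apply (le_INR 1). apply Hpos; auto. Qed.

Lemma Mk_nonneg k j a : 0 <= Mk k j a.
Proof. apply pos_INR. Qed.

Lemma Mk_le_KK j a : (j < n)%nat -> (a < n)%nat -> Mk p j a <= KK.
Proof.
  intros. unfold KK. eapply Rle_trans; [|apply (rsum_term _ _ j)]; auto.
  - apply (rsum_term n (fun a => Mk p j a)); auto. intros; apply Mk_nonneg.
  - intros; apply rsum_nonneg; intros; apply Mk_nonneg.
Qed.

Lemma KK_ge1 : 1 <= KK.
Proof. eapply Rle_trans; [apply (Mk_ge1 0 0)|apply Mk_le_KK]; lia. Qed.

Lemma SS_pos N : 1 <= SS N.
Proof.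
  unfold SS. eapply Rle_trans; [apply (LL_ge1 N 0); lia|]. apply (rsum_term n (fun c => LL N c)); [|lia].
  intros; pose proof (LL_ge1 N j H); lra.
Qed.

Lemma LL_lower N j : (j < n)%nat -> SS N <= LL (N + p) j.
Proof.
  intros Hj. rewrite E3 by auto. unfold SS. apply rsum_le. intros c Hc.
  pose proof (Mk_ge1 c j Hc Hj). pose proof (LL_ge1 N c Hc). nra.
Qed.

Lemma LL_upper N j : (j < n)%nat -> LL (N + p) j <= KK * SS N.
Proof.
  intros Hj. rewrite E3 by auto. unfold SS. rewrite <- rsum_scal. apply rsum_le. intros c Hc.
  pose proof (Mk_le_KK c j Hc Hj). pose proof (LL_ge1 N c Hc). nra.
Qed.

Lemma contraction M :
  gg (M + p) + (GG (M + p) - gg (M + p)) / (INR n * KK * KK) <= gg (M + p + p).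
Proof.
  set (N := (M + p)%nat).
  pose proof KK_ge1. pose proof (SS_pos M).
  assert (Hn' : 1 <= INR n) by (apply (le_INR 1); auto).
  destruct (rmin_att n (rr (N + p)) Hn) as (i & Hi & Ei). unfold gg at 3. rewrite Ei.
  destruct (rmax_att n (rr N) Hn) as (js & Hjs & Ejs).
  assert (HLi : 1 <= LL (N + p) i) by (apply LL_ge1; auto).
  assert (HSN : SS N <= INR n * KK * SS M).
  { unfold SS at 1. apply Rle_trans with (rsum n (fun _ => KK * SS M)).
    - apply rsum_le. intros c Hc. apply LL_upper; auto.
    - right. clear. induction n; [unfold rsum; simpl; lra|]. rewrite rsum_S, IHn0, S_INR. lra. }
  assert (HLup : LL (N + p) i <= INR n * KK * KK * SS M).
  { eapply Rle_trans; [apply LL_upper; auto|]. nra. }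
  assert (Hq : gg N * LL (N + p) i + (GG N - gg N) * SS M <= q theta (N + p) i).
  { eapply Rle_trans; [|apply E1; auto]. rewrite E3 by auto.
    rewrite <- rsum_scal.
    rewrite (rsum_ext _ (fun c => Mk p c i * q theta N c)
       (fun c => gg N * (Mk p c i * LL N c) + Mk p c i * LL N c * (rr N c - gg N))).
    2: { intros c Hc. rewrite q_rr by auto. ring. }
    rewrite rsum_plus. apply Rplus_le_compat_l.
    eapply Rle_trans; [|apply (rsum_term _ _ js)]; auto.
    - unfold GG. rewrite Ejs. pose proof (Mk_ge1 js i Hjs Hi). pose proof (LL_lower M js Hjs).
      fold N in H2. pose proof (gg_le N js Hjs).
      assert (SS M <= Mk p js i * LL N js) by nra.
      assert (0 <= rr N js - gg N) by lra.
      rewrite (Rmult_comm (rr N js - gg N)). apply Rmult_le_compat_r; auto.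
    - intros c Hc. pose proof (gg_le N c Hc). pose proof (Mk_nonneg p c i). pose proof (LL_ge1 N c Hc).
      apply Rmult_le_pos; [|lra]. nra. }
  assert (HG : 0 <= GG N - gg N) by (pose proof (gg_le_GG N); lra).
  unfold rr. apply Rmult_le_reg_r with (LL (N + p) i); [lra|].
  replace (q theta (N + p) i / LL (N + p) i * LL (N + p) i) with (q theta (N + p) i) by (field; lra).
  eapply Rle_trans; [|apply Hq]. rewrite Rmult_plus_distr_r. apply Rplus_le_compat_l.
  assert (HK : 0 < INR n * KK * KK) by nra.
  apply Rmult_le_reg_l with (INR n * KK * KK); auto.
  replace (INR n * KK * KK * ((GG N - gg N) / (INR n * KK * KK) * LL (N + p) i))
    with ((GG N - gg N) * LL (N + p) i) by (field; lra).
  nra.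
Qed.


Lemma gg_mono_le N k : (N <= k)%nat -> gg N <= gg k.
Proof.
  intros H. induction H; [lra|]. eapply Rle_trans; [apply IHle|apply gg_mono].
Qed.

Lemma pow_bernoulli x k : 1 <= x -> 1 + INR k * (x - 1) <= x ^ k.
Proof.
  intros Hx. induction k; [simpl; lra|]. rewrite S_INR. simpl.
  assert (1 <= x ^ k) by (pose proof (Rle_pow x 0 k Hx ltac:(lia)); simpl in H; lra).
  nra.
Qed.

Lemma SS_ge_pow M : lam ^ M <= SS M.
Proof.
  rewrite <- E6. unfold SS. apply rsum_le. intros c Hc. pose proof (Rle1 c Hc).
  pose proof (Rpos c Hc). pose proof (LL_ge1 M c Hc). nra.
Qed.

Lemma LL_growth M j : (j < n)%nat -> 1 + INR M * (lam - 1) <= LL (M + p) j.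
Proof.
  intros Hj. eapply Rle_trans; [apply pow_bernoulli, lam_ge1|].
  eapply Rle_trans; [apply SS_ge_pow|apply LL_lower; auto].
Qed.

Section WithGamma.
Variable gam : R.
Hypothesis Hgam : Un_cv gg gam.

Lemma gg_le_gam N : gg N <= gam.
Proof. apply (cv_ge_const gg gam (gg N) N Hgam). intros; apply gg_mono_le; auto. Qed.

Lemma GG_cv : Un_cv GG gam.
Proof.
  pose proof KK_ge1. assert (Hn' : 1 <= INR n) by (apply (le_INR 1); auto).
  set (c := INR n * KK * KK). assert (Hc : 1 <= c) by (unfold c; nra).
  apply cv_intro. intros eps He.
  destruct (cv_elim gg gam Hgam (eps / c)) as (N0 & HN0).
  { apply Rdiv_lt_0_compat; lra. }
  exists (N0 + p)%nat. intros k Hk.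
  pose proof (HN0 k ltac:(lia)). pose proof (gg_le_GG k). pose proof (gg_le_gam k).
  pose proof (gg_le_gam (k + p)).
  pose proof (contraction (k - p)). replace (k - p + p)%nat with k in H4 by lia.
  fold c in H4.
  assert (GG k - gg k <= c * (gam - gg k)).
  { assert ((GG k - gg k) / c <= gam - gg k) by lra.
    apply Rmult_le_reg_r with (/ c). apply Rinv_0_lt_compat; lra.
    replace (c * (gam - gg k) * / c) with (gam - gg k) by (field; lra). auto. }
  assert (Hlt : c * (gam - gg k) < c * (eps / c)) by (apply Rmult_lt_compat_l; lra).
  replace (c * (eps / c)) with eps in Hlt by (field; lra).
  assert (eps / c <= eps).
  { apply Rmult_le_reg_r with c; [lra|]. replace (eps / c * c) with eps by (field; lra). nra. }
  lra.
Qed.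

Lemma rr_cv i : (i < n)%nat -> Un_cv (fun N => rr N i) gam.
Proof.
  intros Hi. apply (cv_squeeze gg _ GG); auto using GG_cv.
  intros k; split; [apply gg_le|apply GG_ge]; auto.
Qed.

Lemma bb_cv : Un_cv bb gam.
Proof.
  apply (cv_squeeze gg _ GG); auto using GG_cv. intros k; split; [apply gg_bb|apply bb_GG].
Qed.

Lemma bb_le_gam m : bb m <= gam.
Proof.
  apply (cv_ge_const bb gam (bb m) m bb_cv). intros k Hk.
  replace k with (m + (k - m))%nat by lia. apply bb_mono.
Qed.

Lemma gam_le_U m : (1 <= m)%nat -> 1 < lam -> gam <= aa m / (lam ^ m - 1).
Proof.
  intros Hm Hl. apply (cv_le_const bb gam _ 0 bb_cv). intros k _. apply bb_bound; auto.
Qed.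

Lemma gam_nonneg : 0 <= gam.
Proof. eapply Rle_trans; [apply (gg_nonneg 0)|apply gg_le_gam]. Qed.


Lemma ell_large : 1 < lam -> forall L0, exists N0, forall N j, (N0 <= N)%nat -> (j < n)%nat ->
  (L0 <= ellP N j)%nat.
Proof.
  intros Hl L0. destruct (INR_unbounded (INR L0 / (lam - 1))) as (M0 & HM0).
  exists (M0 + p)%nat. intros N j HN Hj.
  pose proof (LL_growth (N - p) j Hj). replace (N - p + p)%nat with N in H by lia.
  assert (INR M0 <= INR (N - p)) by (apply le_INR; lia).
  assert (INR L0 < INR M0 * (lam - 1)).
  { apply Rmult_lt_compat_r with (r := lam - 1) in HM0; [|lra].
    replace (INR L0 / (lam - 1) * (lam - 1)) with (INR L0) in HM0 by (field; lra). lra. }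
  assert (INR L0 < INR (ellP N j)) by (unfold LL in H; nra).
  apply INR_lt in H2. lia.
Qed.

Lemma s_le_gam (c : nat -> nat) s : 1 < lam ->
  (forall l, has_card (lang n theta l) (c l)) ->
  Un_cv (fun l => ln (INR (c l)) / INR l) s -> s <= gam.
Proof.
  intros Hl Hc Hs. apply le_eps_le. intros eps He.
  assert (HnR : 1 <= INR n) by (apply (le_INR 1); auto).
  assert (Hln : 0 <= ln (INR n)) by (apply ln_nonneg; auto).
  destruct (INR_unbounded (2 * ln (INR n) / eps)) as (L1 & HL1).
  set (L0 := S L1).
  destruct (ell_large Hl L0) as (N0 & HN0).
  destruct (cv_elim GG gam GG_cv (eps / 2) ltac:(lra)) as (N1 & HN1).
  pose proof (s_bound (N0 + N1) L0 c s ltac:(unfold L0; lia)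
     (fun j Hj => HN0 (N0 + N1)%nat j ltac:(lia) Hj) Hc Hs).
  specialize (HN1 (N0 + N1)%nat ltac:(lia)).
  assert (ln (INR n) / INR L0 <= eps / 2).
  { assert (HL0 : INR L1 < INR L0) by (apply lt_INR; unfold L0; lia).
    assert (0 < INR L0) by (pose proof (pos_INR L1); lra).
    apply Rmult_le_reg_r with (INR L0); auto.
    replace (ln (INR n) / INR L0 * INR L0) with (ln (INR n)) by (field; lra).
    apply Rmult_lt_compat_r with (r := eps / 2) in HL1; [|lra].
    replace (2 * ln (INR n) / eps * (eps / 2)) with (ln (INR n)) in HL1 by (field; lra).
    nra. }
  lra.
Qed.

Lemma gam_le_s (c : nat -> nat) s : 1 < lam ->
  (forall l, has_card (lang n theta l) (c l)) ->
  Un_cv (fun l => ln (INR (c l)) / INR l) s -> gam <= s.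
Proof.
  intros Hl Hc Hs.
  set (h := fun l => ln (INR (c l)) / INR l).
  assert (Hcomp : Un_cv (fun N => h (ellP N 0)) s).
  { apply cv_intro. intros eps He. destruct (cv_elim h s Hs eps He) as (L0 & HL0).
    destruct (ell_large Hl L0) as (N0 & HN0). exists N0. intros k Hk.
    apply HL0. apply HN0; auto; lia. }
  apply (cv_le_cv (fun N => rr N 0) (fun N => h (ellP N 0)) gam s 0); auto.
  - apply rr_cv; lia.
  - intros N _. unfold h, rr. fold (LL N 0).
    assert (H1 : 1 <= LL N 0) by (apply LL_ge1; lia).
    apply Rmult_le_compat_r. left; apply Rinv_0_lt_compat; lra.
    unfold q. apply ln_le.
    + apply lt_0_INR. pose proof (card_P_pos N [0%nat] (letters_single 0 ltac:(lia))). 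
      unfold P in *. apply Nat.lt_le_trans with 1%nat; [lia|assumption].
    + apply le_INR. apply (card_le_c N 0 c); auto; lia.
Qed.

End WithGamma.

End Contr.

Lemma cv_const x : Un_cv (fun _ => x) x.
Proof. apply cv_intro. intros eps He. exists 0%nat. intros; lra. Qed.

Lemma cv_ext (u v : nat -> R) l : (forall k, u k = v k) -> Un_cv u l -> Un_cv v l.
Proof.
  intros H Hu. apply cv_intro. intros eps He. destruct (cv_elim u l Hu eps He) as (N & HN).
  exists N. intros k Hk. rewrite <- H. auto.
Qed.

Section Lam1.
Hypothesis Hl1 : lam = 1.

Lemma lam1_LL k a : (a < n)%nat -> LL k a = 1.
Proof.
  intros Ha. pose proof (E6 k) as H. rewrite Hl1, pow1 in H.
  assert (Hz : rsum n (fun a => (LL k a - 1) * Rv a) = 0).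
  { rewrite (rsum_ext _ _ (fun a => LL k a * Rv a - Rv a)) by (intros; ring).
    rewrite rsum_minus, H, Rsum1. ring. }
  assert ((LL k a - 1) * Rv a <= 0).
  { rewrite <- Hz. apply (rsum_term n (fun a => (LL k a - 1) * Rv a)); auto.
    intros j Hj. pose proof (LL_ge1 k j Hj). pose proof (Rpos j Hj). nra. }
  pose proof (LL_ge1 k a Ha). pose proof (Rpos a Ha). nra.
Qed.

Lemma lam1_ell k a : (a < n)%nat -> ellP k a = 1%nat.
Proof. intros Ha. pose proof (lam1_LL k a Ha). unfold LL in H. apply INR_eq. simpl. auto. Qed.

Lemma lam1_q m a : (a < n)%nat -> q theta m a = 0.
Proof.
  intros Ha. unfold q.
  assert (card_words (P m [a]) = 1%nat).
  { apply Nat.le_antisymm.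
    - apply card_le1. intros x y Hx Hy.
      pose proof (length_P1 m a x Ha Hx). pose proof (length_P1 m a y Ha Hy).
      rewrite lam1_ell in H, H0 by auto.
      destruct x as [|x0 [|]]; simpl in H; try lia. destruct y as [|y0 [|]]; simpl in H0; try lia.
      pose proof (occ_P1 m a [x0] x0 Ha Hx). pose proof (occ_P1 m a [y0] x0 Ha Hy).
      rewrite <- H2 in H1. unfold occ in H1. simpl in H1.
      destruct (Nat.eq_dec x0 x0); [|congruence]. destruct (Nat.eq_dec y0 x0); [subst; auto|discriminate].
    - apply card_P_pos. apply letters_single; auto. }
  change (subst_pow theta m a) with (P m [a]). rewrite H. simpl. apply ln_1.
Qed.

Lemma lam1_aa m : aa m = 0.
Proof.
  unfold aa, qR. rewrite (rsum_ext _ _ (fun _ => 0)). apply rsum_zero.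
  intros i Hi. rewrite lam1_q by auto. ring.
Qed.

Lemma lam1_c (c : nat -> nat) l : (2 <= l)%nat -> has_card (lang n theta l) (c l) -> c l = 0%nat.
Proof.
  intros Hl (L & _ & HL & Hlen). destruct L as [|u L]; [simpl in Hlen; auto|].
  exfalso. assert (lang n theta l u) by (apply HL; simpl; auto).
  destruct H as (Hu & m & a & w & Ha & Hw & pr & sf & ->).
  pose proof (length_P1 m a _ Ha Hw). rewrite lam1_ell in H by auto.
  rewrite !length_app in H. lia.
Qed.

Lemma lam1_s (c : nat -> nat) s : (forall l, has_card (lang n theta l) (c l)) ->
  Un_cv (fun l => ln (INR (c l)) / INR l) s -> s = 0.
Proof.
  intros Hc Hs.
  assert (Hz : forall l, (2 <= l)%nat -> ln (INR (c l)) / INR l = 0).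
  { intros l Hl. rewrite (lam1_c c l Hl (Hc l)). simpl. rewrite ln_0. unfold Rdiv. ring. }
  apply Rle_antisym.
  - apply (cv_le_const _ s 0 2 Hs). intros; rewrite Hz; auto; lra.
  - apply (cv_ge_const _ s 0 2 Hs). intros; rewrite Hz; auto; lra.
Qed.

End Lam1.

Lemma main_in (s : R) (Hs : top_entropy n theta s) :
  (forall i, (i < n)%nat ->
     exists sl su,
       is_liminf (infl_seq theta i) sl /\ is_limsup (infl_seq theta i) su /\
       forall m, (1 <= m)%nat ->
         qR n theta Rv m / lam ^ m <= sl /\ sl <= su /\ su <= s /\
         s <= qR n theta Rv m / (lam ^ m - 1)) /\
  (forall i, (i < n)%nat -> Un_cv (infl_seq theta i) s) /\
  Un_cv (fun m => qR n theta Rv m / lam ^ m) s /\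
  is_lub (fun x => exists m, (1 <= m)%nat /\ x = qR n theta Rv m / lam ^ m) s.
Proof.
  destruct Hs as (c & Hc & Hcv).
  destruct (Rle_lt_or_eq_dec 1 lam lam_ge1) as [Hl|Hl].
  - destruct Hprim as (p & Hp1 & Hpos).
    destruct (gg_cv Hl) as (gam & Hgam).
    assert (Hsg : s = gam).
    { apply Rle_antisym.
      - apply (s_le_gam p Hp1 Hpos gam Hgam c s); auto.
      - apply (gam_le_s p Hp1 Hpos gam Hgam c s); auto. }
    subst s.
    assert (Hbb : forall m, qR n theta Rv m / lam ^ m = bb m) by reflexivity.
    split; [|split; [|split]].
    + intros i Hi. exists gam, gam.
      split; [apply cv_liminf, (rr_cv p Hp1 Hpos gam Hgam i Hi)|].
      split; [apply cv_limsup, (rr_cv p Hp1 Hpos gam Hgam i Hi)|].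
      intros m Hm. split; [|split; [lra|split; [lra|]]].
      * apply (bb_le_gam p Hp1 Hpos gam Hgam m).
      * apply (gam_le_U p Hp1 Hpos gam Hgam m Hm Hl).
    + intros i Hi. apply (rr_cv p Hp1 Hpos gam Hgam i Hi).
    + apply (bb_cv p Hp1 Hpos gam Hgam).
    + split.
      * intros x (m & Hm & ->). apply (bb_le_gam p Hp1 Hpos gam Hgam m).
      * intros y Hy. apply (cv_le_const bb gam y 1 (bb_cv p Hp1 Hpos gam Hgam)).
        intros k Hk. apply Hy. exists k. split; auto.
  - assert (Hl1 : lam = 1) by auto.
    assert (Hs0 : s = 0) by (apply (lam1_s Hl1 c s); auto). subst s.
    assert (Hq0 : forall m, qR n theta Rv m = 0) by (intros; apply (lam1_aa Hl1)).
    assert (Hr0 : forall i, (i < n)%nat -> forall m, infl_seq theta i m = 0).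
    { intros i Hi m. unfold infl_seq. rewrite (lam1_q Hl1 m i Hi). unfold Rdiv; ring. }
    assert (Hb0 : forall m, qR n theta Rv m / lam ^ m = 0).
    { intros m. rewrite Hq0. unfold Rdiv; ring. }
    split; [|split; [|split]].
    + intros i Hi. exists 0, 0.
      assert (Hcv0 : Un_cv (infl_seq theta i) 0).
      { apply (cv_ext (fun _ => 0)); [intros; rewrite Hr0; auto|apply cv_const]. }
      split; [apply cv_liminf; auto|]. split; [apply cv_limsup; auto|].
      intros m Hm. rewrite Hb0, Hq0. unfold Rdiv. rewrite Rmult_0_l. lra.
    + intros i Hi. apply (cv_ext (fun _ => 0)); [intros; rewrite Hr0; auto|apply cv_const].
    + apply (cv_ext (fun _ => 0)); [intros; rewrite Hb0; auto|apply cv_const].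
    + split.
      * intros x (m & Hm & ->). rewrite Hb0. lra.
      * intros y Hy. apply Hy. exists 1%nat. split; auto.
Qed.

End Struct.

Theorem mainTheorem8 (n : nat) (theta : nat -> list word)
  (lam : R) (Rv : nat -> R) (s : R)
  (Hn : (1 <= n)%nat)
  (Hrs : is_random_subst n theta)
  (Hsc : semi_compatible n theta)
  (Hprim : primitive_mat n (subst_matrix theta))
  (HPF : PF_pair n (subst_matrix theta) lam Rv)
  (Hs : top_entropy n theta s) :
  (forall i, (i < n)%nat ->
     exists sl su,
       is_liminf (infl_seq theta i) sl /\ is_limsup (infl_seq theta i) su /\
       forall m, (1 <= m)%nat ->
         qR n theta Rv m / lam ^ m <= sl /\ sl <= su /\ su <= s /\
         s <= qR n theta Rv m / (lam ^ m - 1)) /\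
  (forall i, (i < n)%nat -> Un_cv (infl_seq theta i) s) /\
  Un_cv (fun m => qR n theta Rv m / lam ^ m) s /\
  is_lub (fun x => exists m, (1 <= m)%nat /\ x = qR n theta Rv m / lam ^ m) s.
Proof.
  exact (main_in n theta Hrs Hsc Hn lam Rv HPF Hprim s Hs).
Qed.
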